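(* Let $s\in\mathbb R$, $p,q\in(0,+\infty]$ and $x_0\in\mathbb R^d$, and assume the wavelet system satisfies the dyadic covering property. Then the set of sequences $\mathcal D\in b^{s,q}_p$ such that $\delta_{\mathcal D}(x_0)=-s+\frac dp$ is prevalent in $b^{s,q}_p$, residual in $b^{s,q}_p$ (it contains a countable intersection of dense open subsets), and maximal lineable in $b^{s,q}_p$ (its union with $\{0\}$ contains a vector subspace whose Hamel dimension equals that of $b^{s,q}_p$).
   Context: Setting: integers $d,N\ge1$, bounded fast-decaying $\psi^{(1)},\dots,\psi^{(N)}:\mathbb R^d\to\mathbb C$, wavelets $\psi^{(i)}_{j,k}(x)=\psi^{(i)}(2^jx-k)$, $j\ge0$, $k\in\mathbb Z^d$; dyadic cubes $\lambda_{j,k}=\prod_{m=1}^d[k_m2^{-j},(k_m+1)2^{-j})$ of scale $j$; coefficients indexed by $(i,\lambda)$; $\Lambda_j$ = pairs $(i,\lambda)$ with $\lambda$ of scale $j$. $b^{s,q}_p$: sequences $(c^{(i)}_\lambda)$ with $\big(\big(\sum_{(i,\lambda)\in\Lambda_j}|c^{(i)}_\lambda2^{(s-d/p)j}|^p\big)^{1/p}\big)_{j\ge0}\in\ell^q$ (supremum if $p=\infty$; $d/p=0$ if $p=\infty$), a complete metric vector space for the $\ell^q$ (quasi-)norm. Divergence exponent $\delta_{\mathcal C}(x)$: supremum of $\gamma$ such that there exist $C>0$ and $(i_n,j_n,k_n)$ with $j_n\to\infty$ and $|c^{(i_n)}_{j_n,k_n}\psi^{(i_n)}_{j_n,k_n}(x)|\ge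 C2^{\gamma j_n}$. Dyadic covering property: there exist $C_0>0$ and finitely many triplets $(i_l,j_l,k_l)$ with $j_l\ge1$ such that every $x\in[0,1)^d$ has some $l$ with $|\psi^{(i_l)}(2^{j_l}x-k_l)|\ge C_0$. Prevalence: in a complete metric vector space $E$, a Borel set $A$ is Haar-null if there is a compactly supported Borel probability measure $\mu$ with $\mu(x+A)=0$ for all $x\in E$; a set is Haar-null if contained in a Haar-null Borel set; its complement is then called prevalent. *)

(* Defs.v *)
From Stdlib Require Import Reals List ZArith Classical ClassicalEpsilon.
From Stdlib Require Fin.
Open Scope R_scope.

Definition Cpx := (R * R)%type.
Definition C0 : Cpx := (0, 0).
Definition Cadd (a b : Cpx) : Cpx := (fst a + fst b, snd a + snd b).
Definition Cmul (a b : Cpx) : Cpx :=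
  (fst a * fst b - snd a * snd b, fst a * snd b + snd a * fst b).
Definition Copp (a : Cpx) : Cpx := (- fst a, - snd a).
Definition Cmod (a : Cpx) : R := sqrt (fst a ^ 2 + snd a ^ 2).

Fixpoint Rvec (d : nat) : Type :=
  match d with O => unit | S d' => (R * Rvec d')%type end.
Fixpoint Zvec (d : nat) : Type :=
  match d with O => unit | S d' => (Z * Zvec d')%type end.

Fixpoint dil_sub (d : nat) : R -> Rvec d -> Zvec d -> Rvec d :=
  match d return R -> Rvec d -> Zvec d -> Rvec d with
  | O => fun _ _ _ => tt
  | S d' => fun a x k => (a * fst x - IZR (fst k), dil_sub d' a (snd x) (snd k))
  end.

Fixpoint Rvec_norm2 (d : nat) : Rvec d -> R :=
  match d return Rvec d -> R with
  | O => fun _ => 0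
  | S d' => fun x => fst x ^ 2 + Rvec_norm2 d' (snd x)
  end.
Definition Rvec_norm (d : nat) (x : Rvec d) : R := sqrt (Rvec_norm2 d x).

Fixpoint in_unit_cube (d : nat) : Rvec d -> Prop :=
  match d return Rvec d -> Prop with
  | O => fun _ => True
  | S d' => fun x => 0 <= fst x < 1 /\ in_unit_cube d' (snd x)
  end.

Definition wav (d N : nat) (psi : Fin.t N -> Rvec d -> Cpx)
  (i : Fin.t N) (j : nat) (k : Zvec d) (x : Rvec d) : Cpx :=
  psi i (dil_sub d (2 ^ j) x k).

Definition bounded_fun (d : nat) (f : Rvec d -> Cpx) : Prop :=
  exists M, forall x, Cmod (f x) <= M.

Definition fast_decaying (d : nat) (f : Rvec d -> Cpx) : Prop :=
  forall M : R, exists K : R, forall x,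
    Cmod (f x) <= K * Rpower (1 + Rvec_norm d x) (- M).

Definition dyadic_covering (d N : nat) (psi : Fin.t N -> Rvec d -> Cpx) : Prop :=
  exists C0' : R, 0 < C0' /\
  exists l : list (Fin.t N * nat * Zvec d),
    (forall t, In t l -> (1 <= snd (fst t))%nat) /\
    forall x, in_unit_cube d x ->
      exists t, In t l /\ Cmod (wav d N psi (fst (fst t)) (snd (fst t)) (snd t) x) >= C0'.

Inductive Exp := ExpF (r : R) | ExpInf.
Definition Exp_pos (p : Exp) : Prop :=
  match p with ExpF r => 0 < r | ExpInf => True end.
Definition inv_exp (p : Exp) : R :=
  match p with ExpF r => / r | ExpInf => 0 end.

(* x^a for x >= 0 (with 0^a = 0, a > 0) *)
Definition rpow (x a : R) : R := if Rle_dec x 0 then 0 else Rpower x a.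

(* ---------- extended nonnegative sups and sums (None = +infinity) ---------- *)
Definition esup (E : R -> Prop) : option R :=
  match excluded_middle_informative (bound E /\ exists x, E x) with
  | left H => Some (proj1_sig (completeness E (proj1 H) (proj2 H)))
  | right _ => None
  end.

Definition fsum {T : Type} (f : T -> R) (l : list T) : R :=
  fold_right (fun x acc => f x + acc) 0 l.

Definition esum {T : Type} (f : T -> R) : option R :=
  esup (fun Ssum => exists l, NoDup l /\ Ssum = fsum f l).

(* coefficients c^{(i)}_{j,k} ; the cube lambda_{j,k} is indexed by (j,k) *)
Definition Coef (d N : nat) : Type := Fin.t N -> nat -> Zvec d -> Cpx.

Definition czero (d N : nat) : Coef d N := fun _ _ _ => C0.
Definition cadd (d N : nat) (a b : Coef d N) : Coef d N :=
  fun i j k => Cadd (a i j k) (b i j k).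
Definition cscal (d N : nat) (z : Cpx) (a : Coef d N) : Coef d N :=
  fun i j k => Cmul z (a i j k).
Definition csub (d N : nat) (a b : Coef d N) : Coef d N :=
  fun i j k => Cadd (a i j k) (Copp (b i j k)).

Definition level (d N : nat) (s : R) (p : Exp) (c : Coef d N) (j : nat) : option R :=
  match p with
  | ExpF r =>
      match esum (fun ik : Fin.t N * Zvec d =>
              rpow (Cmod (c (fst ik) j (snd ik)) * Rpower 2 ((s - INR d / r) * INR j)) r) with
      | Some Ssum => Some (rpow Ssum (/ r))
      | None => None
      end
  | ExpInf => esup (fun v => exists i k, v = Cmod (c i j k) * Rpower 2 (s * INR j))
  end.

Definition levval (d N : nat) (s : R) (p : Exp) (c : Coef d N) (j : nat) : R :=
  match level d N s p c j with Some v => v | None => 0 end.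

Definition bnorm (d N : nat) (s : R) (p q : Exp) (c : Coef d N) : option R :=
  match excluded_middle_informative (forall j, level d N s p c j <> None) with
  | right _ => None
  | left _ =>
      match q with
      | ExpF r =>
          match esum (fun j : nat => rpow (levval d N s p c j) r) with
          | Some Ssum => Some (rpow Ssum (/ r))
          | None => None
          end
      | ExpInf => esup (fun v => exists j, v = levval d N s p c j)
      end
  end.

Definition in_b (d N : nat) (s : R) (p q : Exp) (c : Coef d N) : Prop :=
  exists r, bnorm d N s p q c = Some r.

Definition bnear (d N : nat) (s : R) (p q : Exp) (x y : Coef d N) (eps : R) : Prop :=
  exists r, bnorm d N s p q (csub d N y x) = Some r /\ r < eps.

(* set of gamma admissible in the definition; delta_c(x) is its supremum *)
Definition div_set (d N : nat) (psi : Fin.t N -> Rvec d -> Cpx) (c : Coef d N)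
  (x : Rvec d) (gamma : R) : Prop :=
  exists K : R, 0 < K /\
  exists (iseq : nat -> Fin.t N) (jseq : nat -> nat) (kseq : nat -> Zvec d),
    (forall M : nat, exists n0, forall n, (n0 <= n)%nat -> (M <= jseq n)%nat) /\
    forall n, Cmod (Cmul (c (iseq n) (jseq n) (kseq n))
                         (wav d N psi (iseq n) (jseq n) (kseq n) x))
              >= K * Rpower 2 (gamma * INR (jseq n)).

Definition openE {X : Type} (E : X -> Prop) (near : X -> X -> R -> Prop)
  (U : X -> Prop) : Prop :=
  (forall x, U x -> E x) /\
  forall x, U x -> exists eps, 0 < eps /\ forall y, E y -> near x y eps -> U y.

Definition denseE {X : Type} (E : X -> Prop) (near : X -> X -> R -> Prop)
  (U : X -> Prop) : Prop :=
  forall x, E x -> forall eps, 0 < eps -> exists y, U y /\ near x y eps.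

Definition sigma_alg {X : Type} (E : X -> Prop) (F : (X -> Prop) -> Prop) : Prop :=
  F E /\
  (forall B, F B -> F (fun x => E x /\ ~ B x)) /\
  (forall Bn : nat -> X -> Prop, (forall n, F (Bn n)) -> F (fun x => exists n, Bn n x)).

Definition borel {X : Type} (E : X -> Prop) (near : X -> X -> R -> Prop)
  (B : X -> Prop) : Prop :=
  forall F, sigma_alg E F -> (forall U, openE E near U -> F U) -> F B.

Definition compactE {X : Type} (E : X -> Prop) (near : X -> X -> R -> Prop)
  (K : X -> Prop) : Prop :=
  (forall x, K x -> E x) /\
  forall Fam : (X -> Prop) -> Prop,
    (forall U, Fam U -> openE E near U) ->
    (forall x, K x -> exists U, Fam U /\ U x) ->
    exists l : list (X -> Prop),
      (forall U, In U l -> Fam U) /\ forall x, K x -> exists U, In U l /\ U x.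

Definition borel_prob {X : Type} (E : X -> Prop) (near : X -> X -> R -> Prop)
  (mu : (X -> Prop) -> R) : Prop :=
  (forall B, borel E near B -> 0 <= mu B) /\
  mu E = 1 /\
  (forall B B', borel E near B -> (forall x, B x <-> B' x) -> mu B' = mu B) /\
  (forall Bn : nat -> X -> Prop,
     (forall n, borel E near (Bn n)) ->
     (forall m n x, m <> n -> Bn m x -> Bn n x -> False) ->
     infinite_sum (fun n => mu (Bn n)) (mu (fun x => exists n, Bn n x))).

Definition compactly_supported {X : Type} (E : X -> Prop) (near : X -> X -> R -> Prop)
  (mu : (X -> Prop) -> R) : Prop :=
  exists K, compactE E near K /\ mu K = 1.

(* Borel Haar-null set; sub y x = y - x, so (fun y => B (sub y x)) is x + B *)
Definition haar_null_borel {X : Type} (E : X -> Prop) (near : X -> X -> R -> Prop)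
  (sub : X -> X -> X) (B : X -> Prop) : Prop :=
  borel E near B /\
  exists mu, borel_prob E near mu /\ compactly_supported E near mu /\
    forall x, E x -> mu (fun y => E y /\ B (sub y x)) = 0.

Definition haar_null {X : Type} (E : X -> Prop) (near : X -> X -> R -> Prop)
  (sub : X -> X -> X) (A : X -> Prop) : Prop :=
  exists B, haar_null_borel E near sub B /\ forall x, A x -> B x.

Definition prevalent {X : Type} (E : X -> Prop) (near : X -> X -> R -> Prop)
  (sub : X -> X -> X) (P : X -> Prop) : Prop :=
  haar_null E near sub (fun x => E x /\ ~ P x).

Definition residual {X : Type} (E : X -> Prop) (near : X -> X -> R -> Prop)
  (P : X -> Prop) : Prop :=
  exists Un : nat -> X -> Prop,
    (forall n, openE E near (Un n) /\ denseE E near (Un n)) /\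
    forall x, E x -> (forall n, Un n x) -> P x.

Definition subspace {X : Type} (E : X -> Prop) (zero : X) (add : X -> X -> X)
  (scal : Cpx -> X -> X) (W : X -> Prop) : Prop :=
  (forall x, W x -> E x) /\ W zero /\
  (forall x y, W x -> W y -> W (add x y)) /\
  (forall a x, W x -> W (scal a x)).

Definition lin_comb {X : Type} (zero : X) (add : X -> X -> X) (scal : Cpx -> X -> X)
  (l : list (Cpx * X)) : X :=
  fold_right (fun ax acc => add (scal (fst ax) (snd ax)) acc) zero l.

Definition lin_indep {X : Type} (zero : X) (add : X -> X -> X) (scal : Cpx -> X -> X)
  (B : X -> Prop) : Prop :=
  forall l : list (Cpx * X), NoDup (map snd l) -> (forall ax, In ax l -> B (snd ax)) ->
    lin_comb zero add scal l = zero -> forall ax, In ax l -> fst ax = C0.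

Definition hamel_basis {X : Type} (zero : X) (add : X -> X -> X) (scal : Cpx -> X -> X)
  (B W : X -> Prop) : Prop :=
  (forall x, B x -> W x) /\ lin_indep zero add scal B /\
  forall w, W w -> exists l : list (Cpx * X),
    (forall ax, In ax l -> B (snd ax)) /\ w = lin_comb zero add scal l.

Definition same_card {X : Type} (B1 B2 : X -> Prop) : Prop :=
  exists f : X -> X,
    (forall x, B1 x -> B2 (f x)) /\
    (forall x y, B1 x -> B1 y -> f x = f y -> x = y) /\
    (forall y, B2 y -> exists x, B1 x /\ f x = y).

Definition max_lineable {X : Type} (E : X -> Prop) (zero : X) (add : X -> X -> X)
  (scal : Cpx -> X -> X) (P : X -> Prop) : Prop :=
  exists V, subspace E zero add scal V /\ (forall x, V x -> P x \/ x = zero) /\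
  exists BV BE, hamel_basis zero add scal BV V /\ hamel_basis zero add scal BE E /\
    same_card BV BE.

Definition prevalent_b (d N : nat) (s : R) (p q : Exp) (P : Coef d N -> Prop) : Prop :=
  prevalent (in_b d N s p q) (bnear d N s p q) (csub d N) P.
Definition residual_b (d N : nat) (s : R) (p q : Exp) (P : Coef d N -> Prop) : Prop :=
  residual (in_b d N s p q) (bnear d N s p q) P.
Definition max_lineable_b (d N : nat) (s : R) (p q : Exp) (P : Coef d N -> Prop) : Prop :=
  max_lineable (in_b d N s p q) (czero d N) (cadd d N) (cscal d N) P.

(* Main.v *)
Require Import Defs.
From Stdlib Require Import Reals.
Open Scope R_scope.
From Stdlib Require Import ZArith.
From Stdlib Require Cantor.
From Stdlib Require Import Lra Lia List Classical ClassicalEpsilon FunctionalExtensionality PropExtensionality.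
From Coquelicot Require Complex.
From mathcomp Require classical_sets.
Open Scope R_scope.


Lemma Cmod_ge0 a : 0 <= Cmod a.
Proof. apply sqrt_pos. Qed.
Lemma Cmod_mul a b : Cmod (Cmul a b) = Cmod a * Cmod b.
Proof. exact (Complex.Cmod_mult a b). Qed.
Lemma Cmod_add a b : Cmod (Cadd a b) <= Cmod a + Cmod b.
Proof. exact (Complex.Cmod_triangle a b). Qed.
Lemma Cmod_C0 : Cmod C0 = 0.
Proof. unfold Cmod, C0; simpl. replace (0*(0*1)+0*(0*1)) with 0 by ring. apply sqrt_0. Qed.
Lemma Cmod_opp a : Cmod (Copp a) = Cmod a.
Proof. unfold Cmod, Copp; simpl. f_equal. ring. Qed.
Lemma Cmod_eq0 a : Cmod a = 0 -> a = C0.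
Proof.
  intros H. destruct a as [x y]. unfold Cmod in H; simpl in H.
  apply sqrt_eq_0 in H; [|nra].
  assert (x = 0) by nra. assert (y = 0) by nra. subst. reflexivity.
Qed.
Lemma Cmod_real t : Cmod (t, 0) = Rabs t.
Proof. unfold Cmod; simpl. replace (t*(t*1)+0*(0*1)) with (t*t) by ring. apply sqrt_Rsqr_abs. Qed.
Lemma Cmod_sub_ge a b : Cmod a - Cmod (Cadd a (Copp b)) <= Cmod b.
Proof.
  assert (Cadd (Cadd a (Copp b)) b = a) as E.
  { destruct a, b; unfold Cadd, Copp; simpl; f_equal; ring. }
  pose proof (Cmod_add (Cadd a (Copp b)) b) as H. rewrite E in H. lra.
Qed.

Lemma rpow_ge0 x a : 0 <= rpow x a.
Proof. unfold rpow; destruct (Rle_dec x 0). lra. unfold Rpower; left; apply exp_pos. Qed.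
Lemma rpow_pos x a : 0 < x -> rpow x a = Rpower x a.
Proof. intros H; unfold rpow; destruct (Rle_dec x 0); [lra|reflexivity]. Qed.
Lemma rpow_0 a : rpow 0 a = 0.
Proof. unfold rpow; destruct (Rle_dec 0 0); [reflexivity|lra]. Qed.
Lemma rpow_inv x r : 0 <= x -> 0 < r -> rpow (rpow x r) (/ r) = x.
Proof.
  intros Hx Hr. destruct Hx as [Hx|<-].
  - rewrite (rpow_pos x) by lra. rewrite rpow_pos by (unfold Rpower; apply exp_pos).
    rewrite Rpower_mult. rewrite Rinv_r by lra. apply Rpower_1; lra.
  - rewrite !rpow_0. reflexivity.
Qed.
Lemma rpow_inv' x r : 0 <= x -> 0 < r -> rpow (rpow x (/ r)) r = x.
Proof. intros. pattern r at 2; rewrite <- (Rinv_inv r). apply rpow_inv; auto. apply Rinv_0_lt_compat; auto. Qed.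
Lemma rpow_le x y r : 0 <= x <= y -> 0 < r -> rpow x r <= rpow y r.
Proof.
  intros [Hx Hxy] Hr. destruct Hx as [Hx|<-].
  - rewrite !rpow_pos by lra. unfold Rpower. apply exp_le_3 || idtac.
    destruct Hxy as [Hxy|<-]; [|lra]. left. apply exp_increasing.
    apply Rmult_lt_compat_l; auto. apply ln_increasing; auto.
  - rewrite rpow_0. apply rpow_ge0.
Qed.
Lemma rpow_mul x y r : 0 <= x -> 0 <= y -> rpow (x * y) r = rpow x r * rpow y r.
Proof.
  intros [Hx|<-] [Hy|<-].
  - rewrite !rpow_pos by nra. unfold Rpower. rewrite ln_mult by auto. rewrite <- exp_plus. f_equal; ring.
  - rewrite Rmult_0_r, !rpow_0. ring.
  - rewrite Rmult_0_l, !rpow_0. ring.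
  - rewrite Rmult_0_l, !rpow_0. ring.
Qed.
Lemma rpow_lt_mono x y r : 0 <= x -> 0 <= y -> 0 < r -> rpow x r <= rpow y r -> x <= y.
Proof.
  intros Hx Hy Hr H. destruct (Rle_dec x y) as [|n]; auto.
  assert (y < x) by lra. exfalso.
  destruct Hy as [Hy|<-].
  - rewrite !rpow_pos in H by lra. unfold Rpower in H.
    assert (exp (r * ln y) < exp (r * ln x)). apply exp_increasing. apply Rmult_lt_compat_l; auto. apply ln_increasing; auto. lra.
  - rewrite rpow_0, rpow_pos in H by lra. unfold Rpower in H. pose proof (exp_pos (r * ln x)). lra.
Qed.

Lemma fsum_ge0 {T} (f : T -> R) l : (forall x, 0 <= f x) -> 0 <= fsum f l.
Proof. intros H; induction l; simpl; [lra|]. specialize (H a); lra. Qed.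
Lemma fsum_app {T} (f : T -> R) a b : fsum f (a ++ b) = fsum f a + fsum f b.
Proof. induction a; simpl; [ring|]. rewrite IHa; ring. Qed.

Lemma fsum_incl {T} (g : T -> R) (a b : list T) :
  (forall x, 0 <= g x) -> NoDup a -> (forall x, In x a -> g x <> 0 -> In x b) ->
  fsum g a <= fsum g b.
Proof.
  intros Hg Hnd. revert b. induction Hnd as [|x a Hx Hnd IH]; intros b Hin.
  - simpl. apply fsum_ge0; auto.
  - simpl. destruct (Req_dec (g x) 0) as [E|E].
    + rewrite E. rewrite Rplus_0_l. apply IH. intros y Hy. apply Hin. right; auto.
    + assert (In x b) as Hb by (apply Hin; [left|]; auto).
      destruct (in_split x b Hb) as [b1 [b2 ->]].
      rewrite fsum_app. simpl.
      assert (fsum g a <= fsum g (b1 ++ b2)).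
      { apply IH. intros y Hy Hgy. assert (In y (b1 ++ x :: b2)) by (apply Hin; [right|]; auto).
        apply in_app_or in H. apply in_or_app. destruct H as [H|[H|H]]; auto. subst; contradiction. }
      rewrite fsum_app in H. lra.
Qed.

Lemma esup_spec S v : esup S = Some v -> is_lub S v.
Proof.
  unfold esup. destruct (excluded_middle_informative _) as [H|H]; [|discriminate].
  intros E; inversion E; subst. destruct (completeness S _ _) as [w Hw]; simpl. exact Hw.
Qed.
Lemma esup_some S b : (exists x, S x) -> (forall x, S x -> x <= b) ->
  exists v, esup S = Some v /\ is_lub S v /\ v <= b.
Proof.
  intros Hne Hb. unfold esup. destruct (excluded_middle_informative _) as [H|H].
  - destruct (completeness S _ _) as [w Hw]; simpl. exists w. split; auto. split; auto. apply Hw. intros x Hx; auto.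
  - exfalso. apply H. split; auto. exists b. intros x Hx; auto.
Qed.

Lemma esum_some {T} (f : T -> R) b : (forall x, 0 <= f x) ->
  (forall l, NoDup l -> fsum f l <= b) ->
  exists v, esum f = Some v /\ v <= b /\ (forall l, NoDup l -> fsum f l <= v).
Proof.
  intros H0 Hb. unfold esum. destruct (esup_some (fun Ssum => exists l, NoDup l /\ Ssum = fsum f l) b) as [v [E [L Hv]]].
  - exists 0, nil. split; [constructor|reflexivity].
  - intros x [l [Hl ->]]. auto.
  - exists v. split; auto. split; auto. intros l Hl. apply L. exists l; auto.
Qed.
Lemma esum_ge {T} (f : T -> R) v : esum f = Some v -> forall l, NoDup l -> fsum f l <= v.
Proof. intros E l Hl. apply esup_spec in E. apply E. exists l; auto. Qed.
Lemma esum_pt {T} (f : T -> R) v : esum f = Some v -> forall t, f t <= v.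
Proof. intros E t. pose proof (esum_ge f v E (t :: nil)). simpl in H. assert (NoDup (t::nil)) by (constructor; [simpl; tauto|constructor]). specialize (H H0). lra. Qed.
Lemma esum_ge0 {T} (f : T -> R) v : esum f = Some v -> 0 <= v.
Proof. intros E. pose proof (esum_ge f v E nil (NoDup_nil _)). simpl in H. lra. Qed.

Definition gam (d : nat) (s : R) (p : Exp) : R := - s + INR d * inv_exp p.
Definition wt (d : nat) (s : R) (p : Exp) (j : nat) : R := Rpower 2 (- gam d s p * INR j).
Definition cw {d N} (s : R) (p : Exp) (c : Coef d N) i j k : R := Cmod (c i j k) * wt d s p j.

Lemma wt_pos d s p j : 0 < wt d s p j.
Proof. unfold wt, Rpower. apply exp_pos. Qed.
Lemma cw_ge0 {d N} s p (c : Coef d N) i j k : 0 <= cw s p c i j k.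
Proof. unfold cw. apply Rmult_le_pos; [apply Cmod_ge0|left; apply wt_pos]. Qed.

Lemma wt_F d s r j : Rpower 2 ((s - INR d / r) * INR j) = wt d s (ExpF r) j.
Proof. unfold wt, gam, inv_exp. f_equal. unfold Rdiv. ring. Qed.
Lemma wt_I d s j : Rpower 2 (s * INR j) = wt d s ExpInf j.
Proof. unfold wt, gam, inv_exp. f_equal. ring. Qed.

Lemma fsum_ext_in {T} (f g : T -> R) l : (forall x, In x l -> f x = g x) -> fsum f l = fsum g l.
Proof. induction l; simpl; intros H; auto. rewrite H by auto. rewrite IHl; auto. Qed.

Lemma fsum_mod {T} (f f' : T -> R) (pt : T) a : (forall x, 0 <= f x) ->
  0 <= f' pt -> (forall x, x <> pt -> f' x = f x) -> NoDup a -> fsum f' a <= fsum f a + f' pt.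
Proof.
  intros H0 Hp Hm Hnd. induction Hnd as [|x a Hx Hnd IH]; simpl.
  - lra.
  - destruct (classic (x = pt)) as [->|Hne].
    + rewrite (fsum_ext_in f' f a). pose proof (H0 pt). lra.
      intros y Hy. apply Hm. intros ->. contradiction.
    + rewrite Hm by auto. lra.
Qed.

Lemma level_pt {d N} s p (c : Coef d N) j v : Exp_pos p ->
  level d N s p c j = Some v -> forall i k, cw s p c i j k <= v.
Proof.
  intros Hp E i k. destruct p as [r|]; simpl in *.
  - destruct (esum _) as [S|] eqn:ES; [|discriminate]. inversion E; subst.
    pose proof (esum_pt _ _ ES (i, k)) as H. simpl in H. rewrite (wt_F d) in H.
    apply (rpow_lt_mono _ _ r); auto. apply cw_ge0. apply rpow_ge0.
    rewrite rpow_inv'; auto. apply (esum_ge0 _ _ ES).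
  - apply esup_spec in E. apply E. exists i, k. rewrite (wt_I d). reflexivity.
Qed.

Lemma level_ge0 {d N} s p (c : Coef d N) j v : Exp_pos p -> (exists i : Fin.t N, True) -> (exists k : Zvec d, True) ->
  level d N s p c j = Some v -> 0 <= v.
Proof.
  intros Hp [i _] [k _] E. pose proof (@level_pt d N s p c j v Hp E i k). pose proof (cw_ge0 s p c i j k). lra.
Qed.

Lemma level_single {d N} s p (c : Coef d N) j i0 k0 : Exp_pos p ->
  (forall i k, (i, k) <> (i0, k0) -> c i j k = C0) -> level d N s p c j = Some (cw s p c i0 j k0).
Proof.
  intros Hp Hz. destruct p as [r|]; simpl in *.
  - set (f := fun ik : Fin.t N * Zvec d => rpow (Cmod (c (fst ik) j (snd ik)) * Rpower 2 ((s - INR d / r) * INR j)) r).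
    assert (Hf0 : forall x, 0 <= f x) by (intros; apply rpow_ge0).
    destruct (esum_some f (f (i0, k0)) Hf0) as [v [Ev [Hv1 Hv2]]].
    { intros l Hl. replace (f (i0,k0)) with (fsum f ((i0,k0)::nil)) by (simpl; ring).
      apply fsum_incl; auto. intros [i k] _ Hne. left. destruct (classic ((i0,k0) = (i,k))); auto.
      exfalso; apply Hne. unfold f; simpl. rewrite Hz by auto. rewrite Cmod_C0, Rmult_0_l, rpow_0. reflexivity. }
    fold f. rewrite Ev.
    assert (v = f (i0,k0)). { pose proof (esum_pt _ _ Ev (i0,k0)). lra. }
    subst v. unfold f; simpl. rewrite (wt_F d). rewrite rpow_inv; auto. apply cw_ge0.
  - destruct (esup_some (fun v => exists i k, v = Cmod (c i j k) * Rpower 2 (s * INR j)) (cw s ExpInf c i0 j k0)) as [v [Ev [Hl _]]].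
    + exists (cw s ExpInf c i0 j k0), i0, k0. rewrite (wt_I d); reflexivity.
    + intros x [i [k ->]]. rewrite (wt_I d). destruct (classic ((i,k) = (i0,k0))) as [E|E].
      * inversion E; subst; unfold cw; lra.
      * rewrite Hz by auto. rewrite Cmod_C0, Rmult_0_l. apply cw_ge0.
    + rewrite Ev. f_equal. apply Rle_antisym.
      * apply Hl. intros x [i [k ->]]. rewrite (wt_I d). destruct (classic ((i,k) = (i0,k0))) as [E|E].
        -- inversion E; subst; unfold cw; lra.
        -- rewrite Hz by auto. rewrite Cmod_C0, Rmult_0_l. apply cw_ge0.
      * apply Hl. exists i0, k0. rewrite (wt_I d); reflexivity.
Qed.

Lemma bnorm_eq {d N} s p q (c : Coef d N) : (forall j, level d N s p c j <> None) ->
  bnorm d N s p q c = match q with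
      | ExpF r =>
          match esum (fun j : nat => rpow (levval d N s p c j) r) with
          | Some Ssum => Some (rpow Ssum (/ r))
          | None => None
          end
      | ExpInf => esup (fun v => exists j, v = levval d N s p c j)
      end.
Proof. intros H. unfold bnorm. destruct (excluded_middle_informative _) as [_|n]; [reflexivity|contradiction]. Qed.

Lemma bnorm_levels {d N} s p q (c : Coef d N) B : bnorm d N s p q c = Some B -> forall j, level d N s p c j <> None.
Proof. unfold bnorm. destruct (excluded_middle_informative _) as [H|_]; [auto|discriminate]. Qed.

Lemma bnorm_lb {d N} s p q (c : Coef d N) B : Exp_pos q -> bnorm d N s p q c = Some B ->
  forall j, exists v, level d N s p c j = Some v /\ v <= B.
Proof.
  intros Hq E j. pose proof (bnorm_levels _ _ _ _ _ E) as HL.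
  destruct (level d N s p c j) as [v|] eqn:Ev; [|exfalso; apply (HL j); auto].
  exists v; split; auto. rewrite bnorm_eq in E by auto.
  assert (levval d N s p c j = v) as Hv by (unfold levval; rewrite Ev; auto).
  destruct q as [r|]; simpl in Hq.
  - destruct (esum _) as [S|] eqn:ES; [|discriminate]. inversion E; subst B.
    pose proof (esum_pt _ _ ES j) as H. simpl in H. rewrite Hv in H.
    destruct (Rle_dec 0 v) as [H0|H0].
    + apply (rpow_lt_mono _ _ r); auto. apply rpow_ge0. rewrite rpow_inv'; auto. apply (esum_ge0 _ _ ES).
    + pose proof (rpow_ge0 S (/r)). lra.
  - apply esup_spec in E. apply E. exists j; auto.
Qed.

Lemma in_b_coef {d N} s p q (c : Coef d N) B : Exp_pos p -> Exp_pos q -> bnorm d N s p q c = Some B ->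
  forall i j k, cw s p c i j k <= B.
Proof.
  intros Hp Hq E i j k. destruct (bnorm_lb s p q c B Hq E j) as [v [Ev Hv]].
  pose proof (level_pt s p c j v Hp Ev i k). lra.
Qed.

Lemma fsum_map {T U} (g : U -> R) (e : T -> U) l : fsum g (map e l) = fsum (fun m => g (e m)) l.
Proof. induction l; simpl; auto. rewrite IHl; auto. Qed.

Lemma cover_seq {T} (g : T -> R) (e : nat -> T) a :
  (forall x, g x <> 0 -> exists m, e m = x) ->
  exists n, forall x, In x a -> g x <> 0 -> In x (map e (seq 0 n)).
Proof.
  intros He. induction a as [|x a IH].
  - exists 0%nat. intros x [].
  - destruct IH as [n Hn]. destruct (classic (g x = 0)) as [Z|Z].
    + exists n. intros y [<-|Hy] Hy0; [contradiction|auto].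
    + destruct (He x Z) as [m Hm]. exists (Nat.max n (S m)). intros y [<-|Hy] Hy0.
      * apply in_map_iff. exists m. split; auto. apply in_seq. lia.
      * specialize (Hn y Hy Hy0). apply in_map_iff in Hn. destruct Hn as [m' [Hm' Hin]].
        apply in_map_iff. exists m'. split; auto. apply in_seq in Hin. apply in_seq. lia.
Qed.

Lemma esum_seq_bound {T} (g : T -> R) (e : nat -> T) S : (forall x, 0 <= g x) ->
  (forall x, g x <> 0 -> exists m, e m = x) ->
  (forall n, fsum (fun m => g (e m)) (seq 0 n) <= S) ->
  exists v, esum g = Some v /\ v <= S.
Proof.
  intros H0 He HS. destruct (esum_some g S H0) as [v [Ev [Hv _]]].
  - intros l Hl. destruct (cover_seq g e l He) as [n Hn].
    eapply Rle_trans. apply (fsum_incl g l (map e (seq 0 n))); auto.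
    rewrite fsum_map. auto.
  - exists v; auto.
Qed.

Lemma bnorm_ubF {d N} s p r (c : Coef d N) (v : nat -> R) (e : nat -> nat) S :
  0 < r -> (forall j, level d N s p c j = Some (v j)) -> (forall j, 0 <= v j) ->
  (forall j, v j <> 0 -> exists m, e m = j) ->
  (forall n, fsum (fun m => rpow (v (e m)) r) (seq 0 n) <= S) ->
  exists B, bnorm d N s p (ExpF r) c = Some B /\ B <= rpow S (/ r).
Proof.
  intros Hr Hl Hv0 He HS. rewrite bnorm_eq by (intros j; rewrite Hl; discriminate).
  assert (Hlv : forall j, levval d N s p c j = v j) by (intros j; unfold levval; rewrite Hl; auto).
  destruct (esum_seq_bound (fun j => rpow (levval d N s p c j) r) e S) as [w [Ew Hw]].
  - intros; apply rpow_ge0.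
  - intros j Hj. apply He. rewrite Hlv in Hj. intros E; apply Hj; rewrite E; apply rpow_0.
  - intros n. eapply Rle_trans; [|apply (HS n)]. right. apply fsum_ext_in. intros; rewrite Hlv; auto.
  - rewrite Ew. eexists; split; [reflexivity|]. apply rpow_le; [|apply Rinv_0_lt_compat; auto].
    split; auto. apply (esum_ge0 _ _ Ew).
Qed.

Lemma bnorm_ubI {d N} s p (c : Coef d N) (v : nat -> R) L :
  (forall j, level d N s p c j = Some (v j)) -> (forall j, v j <= L) ->
  exists B, bnorm d N s p ExpInf c = Some B /\ B <= L.
Proof.
  intros Hl HL. rewrite bnorm_eq by (intros j; rewrite Hl; discriminate).
  assert (Hlv : forall j, levval d N s p c j = v j) by (intros j; unfold levval; rewrite Hl; auto).
  destruct (esup_some (fun x => exists j, x = levval d N s p c j) L) as [B [EB [_ HB]]].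
  - exists (levval d N s p c 0), 0%nat; auto.
  - intros x [j ->]. rewrite Hlv; auto.
  - exists B; auto.
Qed.

Lemma level_loc {d N} s p (c : Coef d N) j : level d N s p c j = level d N s p (fun i _ k => c i j k) j.
Proof. reflexivity. Qed.
Lemma level_ext {d N} s p (c c' : Coef d N) j : (forall i k, c' i j k = c i j k) ->
  level d N s p c' j = level d N s p c j.
Proof.
  intros H. rewrite (level_loc s p c'), (level_loc s p c). f_equal.
  apply functional_extensionality; intros i. apply functional_extensionality; intros _.
  apply functional_extensionality; intros k. auto.
Qed.

Lemma in_b_mod {d N} s p q (c c' : Coef d N) i0 j0 k0 : Exp_pos p -> Exp_pos q ->
  in_b d N s p q c -> (forall i j k, (i, j, k) <> (i0, j0, k0) -> c' i j k = c i j k) ->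
  in_b d N s p q c'.
Proof.
  intros Hp Hq [B EB] Hm.
  assert (Hlj : forall j, j <> j0 -> level d N s p c' j = level d N s p c j).
  { intros j Hj. apply level_ext. intros i k. apply Hm. intros E; inversion E; auto. }
  assert (Hl0 : exists v, level d N s p c' j0 = Some v).
  { destruct (bnorm_lb s p q c B Hq EB j0) as [v [Ev _]].
    destruct p as [r|]; simpl in Ev |- *.
    - destruct (esum _) as [S|] eqn:ES; [|discriminate].
      set (f := fun ik : Fin.t N * Zvec d => rpow (Cmod (c (fst ik) j0 (snd ik)) * Rpower 2 ((s - INR d / r) * INR j0)) r) in ES.
      set (f' := fun ik : Fin.t N * Zvec d => rpow (Cmod (c' (fst ik) j0 (snd ik)) * Rpower 2 ((s - INR d / r) * INR j0)) r).
      destruct (esum_some f' (S + f' (i0, k0))) as [w [Ew _]].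
      + intros; apply rpow_ge0.
      + intros l Hl. eapply Rle_trans. apply (fsum_mod f f' (i0,k0)); auto.
        intros; apply rpow_ge0. apply rpow_ge0.
        intros [i k] Hik. unfold f, f'; simpl. rewrite Hm; auto. intros E; inversion E; subst; auto.
        pose proof (esum_ge f S ES l Hl). lra.
      + fold f'. rewrite Ew. eauto.
    - pose proof (level_pt s ExpInf c j0 v I Ev) as Hpt.
      destruct (esup_some (fun v0 => exists i k, v0 = Cmod (c' i j0 k) * Rpower 2 (s * INR j0)) (Rmax v (cw s ExpInf c' i0 j0 k0))) as [w [Ew _]].
      + exists (Cmod (c' i0 j0 k0) * Rpower 2 (s * INR j0)), i0, k0; auto.
      + intros x [i [k ->]]. rewrite (wt_I d). destruct (classic ((i,k) = (i0,k0))) as [E|E].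
        * inversion E; subst. apply Rmax_r.
        * rewrite Hm by (intros E'; inversion E'; subst; auto).
          eapply Rle_trans; [apply (Hpt i k)|apply Rmax_l].
      + rewrite Ew; eauto. }
  destruct Hl0 as [v0 Ev0].
  assert (HL : forall j, level d N s p c' j <> None).
  { intros j. destruct (Nat.eq_dec j j0) as [->|Hj]. rewrite Ev0; discriminate.
    rewrite Hlj by auto. apply (bnorm_levels _ _ _ _ _ EB). }
  exists (match bnorm d N s p q c' with Some x => x | None => 0 end).
  destruct (bnorm d N s p q c') eqn:E'; auto. exfalso. rewrite bnorm_eq in E' by auto.
  assert (Hvv : forall j, j <> j0 -> levval d N s p c' j = levval d N s p c j).
  { intros j Hj. unfold levval. rewrite Hlj; auto. }
  rewrite bnorm_eq in EB by apply (bnorm_levels _ _ _ _ _ EB).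
  destruct q as [r|]; simpl in Hq.
  - destruct (esum (fun j => rpow (levval d N s p c j) r)) as [S|] eqn:ES; [|discriminate].
    destruct (esum_some (fun j => rpow (levval d N s p c' j) r) (S + rpow (levval d N s p c' j0) r)) as [w [Ew _]].
    + intros; apply rpow_ge0.
    + intros l Hl. eapply Rle_trans. apply (fsum_mod (fun j => rpow (levval d N s p c j) r) _ j0); auto.
      intros; apply rpow_ge0. apply rpow_ge0. intros j Hj. rewrite Hvv; auto.
      pose proof (esum_ge _ S ES l Hl). lra.
    + rewrite Ew in E'. discriminate.
  - apply esup_spec in EB.
    destruct (esup_some (fun v => exists j, v = levval d N s p c' j) (Rmax B (levval d N s p c' j0))) as [w [Ew _]].
    + exists (levval d N s p c' 0); eauto.
    + intros x [j ->]. destruct (Nat.eq_dec j j0) as [->|Hj].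
      * apply Rmax_r.
      * rewrite Hvv by auto. assert (levval d N s p c j <= B) by (apply EB; eauto).
        eapply Rle_trans; [apply H|apply Rmax_l].
    + rewrite Ew in E'. discriminate.
Qed.

Lemma fin_bound N (P : Fin.t N -> R -> Prop) :
  (forall i, exists M, P i M) -> (forall i M M', P i M -> M <= M' -> P i M') -> exists M, forall i, P i M.
Proof.
  induction N as [|N IH]; intros H Hmono.
  - exists 0. intros i. apply Fin.case0. exact i.
  - destruct (IH (fun i => P (Fin.FS i))) as [M1 HM1]; auto.
    intros i M M'; apply Hmono.
    destruct (H Fin.F1) as [M0 HM0]. exists (Rmax M0 M1). intros i.
    apply (Fin.caseS' i).
    + apply (Hmono _ M0); auto. apply Rmax_l.
    + intros i'. apply (Hmono _ M1); auto. apply Rmax_r.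
Qed.

Lemma psi_bound d N (psi : Fin.t N -> Rvec d -> Cpx) : (forall i, bounded_fun d (psi i)) ->
  exists M, 0 <= M /\ forall i y, Cmod (psi i y) <= M.
Proof.
  intros Hb. destruct (fin_bound N (fun i M => forall y, Cmod (psi i y) <= M)) as [M HM].
  - intros i; apply Hb.
  - intros i M M' H1 H2 y. specialize (H1 y). lra.
  - exists (Rmax 0 M). split; [apply Rmax_l|]. intros i y. eapply Rle_trans; [apply HM|apply Rmax_r].
Qed.

Fixpoint flo (d : nat) : R -> Rvec d -> Zvec d :=
  match d return R -> Rvec d -> Zvec d with
  | O => fun _ _ => tt
  | S d' => fun a x => (Int_part (a * fst x), flo d' a (snd x))
  end.

Lemma flo_cube d a x : in_unit_cube d (dil_sub d a x (flo d a x)).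
Proof.
  induction d as [|d IH]; simpl; auto. split; auto.
  pose proof (base_Int_part (a * fst x)). lra.
Qed.

Fixpoint zmix (d : nat) (jl : nat) : Zvec d -> Zvec d -> Zvec d :=
  match d return Zvec d -> Zvec d -> Zvec d with
  | O => fun _ _ => tt
  | S d' => fun k k2 => ((2 ^ Z.of_nat jl * fst k + fst k2)%Z, zmix d' jl (snd k) (snd k2))
  end.

Lemma dil_comp d jl a x k k2 :
  dil_sub d (2 ^ jl) (dil_sub d a x k) k2 = dil_sub d (2 ^ jl * a) x (zmix d jl k k2).
Proof.
  induction d as [|d IH]; simpl; auto. f_equal; auto.
  rewrite plus_IZR, mult_IZR, pow_IZR. simpl. ring.
Qed.

Fixpoint zv (d : nat) : Zvec d := match d with O => tt | S d' => (0%Z, zv d') end.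
Fixpoint rv (d : nat) : Rvec d := match d with O => tt | S d' => (0, rv d') end.


Lemma list_max_ge {T} (f : T -> nat) (l : list T) t : In t l -> (f t <= fold_right Nat.max 0%nat (map f l))%nat.
Proof. induction l; simpl; [tauto|]. intros [->|H]; [lia|]. specialize (IHl H). lia. Qed.

Lemma covering_levels d N (psi : Fin.t N -> Rvec d -> Cpx) x0 : dyadic_covering d N psi ->
  exists C0 L, 0 < C0 /\ forall J : nat, exists i j k, (J < j <= J + L)%nat /\
     Cmod (wav d N psi i j k x0) >= C0.
Proof.
  intros [C0 [HC0 [l [Hl1 Hcov]]]].
  exists C0, (fold_right Nat.max 0%nat (map (fun t : Fin.t N * nat * Zvec d => snd (fst t)) l)). split; auto.
  intros J. destruct (Hcov _ (flo_cube d (2 ^ J) x0)) as [[[i jl] kl] [Hin Hge]]. simpl in *.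
  exists i, (jl + J)%nat, (zmix d jl (flo d (2 ^ J) x0) kl). split.
  - pose proof (Hl1 _ Hin); simpl in H. pose proof (list_max_ge (fun t : Fin.t N * nat * Zvec d => snd (fst t)) l _ Hin). simpl in H0. lia.
  - unfold wav in *. rewrite dil_comp in Hge. rewrite pow_add. exact Hge.
Qed.

Lemma exists_nat_gt A : exists n : nat, A < INR n.
Proof.
  destruct (archimed A) as [H1 _]. destruct (Z.le_gt_cases (up A) 0) as [H|H].
  - exists 0%nat. simpl. apply IZR_le in H. lra.
  - exists (Z.to_nat (up A)). rewrite INR_IZR_INZ. rewrite Z2Nat.id by lia. lra.
Qed.

Lemma Rpower2_unbounded delta A : 0 < delta -> exists J0 : nat, forall j : nat, (J0 <= j)%nat -> A < Rpower 2 (delta * INR j).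
Proof.
  intros Hd. assert (Hl : 0 < ln 2) by (pose proof ln_lt_2; lra).
  destruct (exists_nat_gt (A / (delta * ln 2))) as [J0 HJ]. exists J0. intros j Hj.
  unfold Rpower. apply le_INR in Hj.
  assert (A < delta * INR j * ln 2).
  { assert (A / (delta * ln 2) < INR j) by lra.
    apply (Rmult_lt_compat_r (delta * ln 2)) in H; [|nra].
    unfold Rdiv in H. rewrite Rmult_assoc, Rinv_l in H by nra. lra. }
  replace (delta * INR j * ln 2) with (delta * INR j * ln 2) in H by ring.
  destruct (Req_dec (delta * INR j * ln 2) 0) as [Z|Z].
  - rewrite Z in H. pose proof (exp_pos (delta * INR j * ln 2)). lra.
  - pose proof (exp_ineq1 _ Z). lra.
Qed.

Definition Pm {d N} (psi : Fin.t N -> Rvec d -> Cpx) (s : R) (p : Exp) (x0 : Rvec d) (c : Coef d N) (m : nat) : Prop :=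
  exists K, 0 < K /\ forall n : nat, exists i j k, (n <= j)%nat /\
    Cmod (Cmul (c i j k) (wav d N psi i j k x0)) >= K * Rpower 2 ((gam d s p - / INR (S m)) * INR j).

Lemma div_upper {d N} (psi : Fin.t N -> Rvec d -> Cpx) s p q x0 (c : Coef d N) B Mp :
  Exp_pos p -> Exp_pos q -> bnorm d N s p q c = Some B -> (forall i y, Cmod (psi i y) <= Mp) ->
  forall g, div_set d N psi c x0 g -> g <= gam d s p.
Proof.
  intros Hp Hq EB HM g [K [HK [iseq [jseq [kseq [Hj Hge]]]]]].
  destruct (Rle_dec g (gam d s p)) as [|Hn]; auto. exfalso.
  assert (Hd : 0 < g - gam d s p) by lra.
  assert (0 <= B). { pose proof (in_b_coef s p q c B Hp Hq EB (iseq 0%nat) 0%nat (kseq 0%nat)). pose proof (cw_ge0 s p c (iseq 0%nat) 0%nat (kseq 0%nat)). lra. }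
  assert (0 <= Mp). { pose proof (HM (iseq 0%nat) (rv d)). pose proof (Cmod_ge0 (psi (iseq 0%nat) (rv d))). lra. }
  destruct (Rpower2_unbounded _ (B * Mp / K) Hd) as [J0 HJ0].
  destruct (Hj J0) as [n0 Hn0]. specialize (Hn0 n0 (le_n _)). specialize (HJ0 _ Hn0).
  specialize (Hge n0). set (j := jseq n0) in *. rewrite Cmod_mul in Hge.
  pose proof (in_b_coef s p q c B Hp Hq EB (iseq n0) j (kseq n0)) as Hc. unfold cw, wt in Hc.
  pose proof (HM (iseq n0) (dil_sub d (2 ^ j) x0 (kseq n0))) as Hps. unfold wav in Hge.
  set (a := Cmod (c (iseq n0) j (kseq n0))) in *. set (b := Cmod (psi (iseq n0) (dil_sub d (2 ^ j) x0 (kseq n0)))) in *.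
  assert (0 <= a) by apply Cmod_ge0. assert (0 <= b) by apply Cmod_ge0.
  assert (Hw : Rpower 2 (- gam d s p * INR j) * Rpower 2 (g * INR j) = Rpower 2 ((g - gam d s p) * INR j)).
  { rewrite <- Rpower_plus. f_equal. ring. }
  assert (Hwp : 0 < Rpower 2 (- gam d s p * INR j)) by (unfold Rpower; apply exp_pos).
  (* K 2^{g j} <= a b, a 2^{-gam j} <= B, b <= Mp *)
  assert (K * Rpower 2 ((g - gam d s p) * INR j) <= B * Mp).
  { rewrite <- Hw. assert (a * b * Rpower 2 (- gam d s p * INR j) <= B * Mp).
    { replace (a * b * Rpower 2 (- gam d s p * INR j)) with ((a * Rpower 2 (- gam d s p * INR j)) * b) by ring.
      apply Rmult_le_compat; auto. apply Rmult_le_pos; lra. }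
    assert (K * Rpower 2 (g * INR j) * Rpower 2 (- gam d s p * INR j) <= a * b * Rpower 2 (- gam d s p * INR j)).
    { apply Rmult_le_compat_r; lra. } nra. }
  assert (B * Mp / K * K = B * Mp) by (field; lra). nra.
Qed.

Lemma D_of_Pm {d N} (psi : Fin.t N -> Rvec d -> Cpx) s p q x0 (c : Coef d N) B Mp :
  Exp_pos p -> Exp_pos q -> bnorm d N s p q c = Some B -> (forall i y, Cmod (psi i y) <= Mp) ->
  (forall m, Pm psi s p x0 c m) -> is_lub (div_set d N psi c x0) (gam d s p).
Proof.
  intros Hp Hq EB HM HP. split.
  - intros g Hg. eapply div_upper; eauto.
  - intros b Hb. destruct (Rle_dec (gam d s p) b) as [|Hn]; auto. exfalso.
    destruct (exists_nat_gt (/ (gam d s p - b))) as [m Hm].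
    assert (Hgb : 0 < gam d s p - b) by lra.
    assert (Hlt : / INR (S m) < gam d s p - b).
    { rewrite S_INR. assert (0 < / (gam d s p - b)) by (apply Rinv_0_lt_compat; lra).
      rewrite <- (Rinv_inv (gam d s p - b)). apply Rinv_lt_contravar; [|lra].
      apply Rmult_lt_0_compat; [lra|]. pose proof (pos_INR m); lra. }
    assert (gam d s p - / INR (S m) <= b); [|lra].
    apply Hb. destruct (HP m) as [K [HK Hn']].
    assert (Hs : forall n, {t : Fin.t N * nat * Zvec d | (n <= snd (fst t))%nat /\
       Cmod (Cmul (c (fst (fst t)) (snd (fst t)) (snd t)) (wav d N psi (fst (fst t)) (snd (fst t)) (snd t) x0)) >=
       K * Rpower 2 ((gam d s p - / INR (S m)) * INR (snd (fst t)))}).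
    { intros n. apply constructive_indefinite_description. destruct (Hn' n) as [i [j [k H]]]. exists (i, j, k); exact H. }
    exists K. split; auto.
    exists (fun n => fst (fst (proj1_sig (Hs n)))), (fun n => snd (fst (proj1_sig (Hs n)))), (fun n => snd (proj1_sig (Hs n))).
    split.
    + intros M. exists M. intros n Hn2. pose proof (proj1 (proj2_sig (Hs n))). lia.
    + intros n. exact (proj2 (proj2_sig (Hs n))).
Qed.

Lemma Cadd_opp_r a : Cadd a (Copp a) = C0.
Proof. destruct a; unfold Cadd, Copp, C0; simpl; f_equal; ring. Qed.
Lemma Cmul_C0_l a : Cmul C0 a = C0.
Proof. destruct a; unfold Cmul, C0; simpl; f_equal; ring. Qed.
Lemma Cmod_real_mul a t : 0 <= t -> Cmod (Cmul a (t, 0)) = Cmod a * t.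
Proof. intros H. rewrite Cmod_mul, Cmod_real, Rabs_pos_eq; auto. Qed.

Definition cidx {d N} (c : Coef d N) (t : Fin.t N * nat * Zvec d) : Cpx := c (fst (fst t)) (snd (fst t)) (snd t).
Definition jof {d N} (t : Fin.t N * nat * Zvec d) : nat := snd (fst t).

Definition rho d N s p (lev sig : nat -> Fin.t N * nat * Zvec d) (m : nat) : R :=
  wt d s p (jof (sig m)) * Rpower 2 (- INR m) / wt d s p (jof (lev m)).

Definition Tmap d N s p (lev sig : nat -> Fin.t N * nat * Zvec d) (c : Coef d N) : Coef d N :=
  fun i j k => match excluded_middle_informative (exists m, lev m = (i, j, k)) with
  | left H => Cmul (cidx c (sig (proj1_sig (constructive_indefinite_description _ H)))) (rho d N s p lev sig (proj1_sig (constructive_indefinite_description _ H)), 0)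
  | right _ => C0 end.

Definition lev_inj {d N} (lev : nat -> Fin.t N * nat * Zvec d) := forall m m', jof (lev m) = jof (lev m') -> m = m'.

Lemma rho_pos d N s p lev sig m : 0 < rho d N s p lev sig m.
Proof. unfold rho. pose proof (wt_pos d s p (jof (sig m))). pose proof (wt_pos d s p (jof (lev m))).
  assert (0 < Rpower 2 (- INR m)) by (unfold Rpower; apply exp_pos).
  unfold Rdiv. apply Rmult_lt_0_compat; [nra|apply Rinv_0_lt_compat; auto]. Qed.

Lemma Tmap_lev d N s p lev sig c m : lev_inj lev ->
  cidx (Tmap d N s p lev sig c) (lev m) = Cmul (cidx c (sig m)) (rho d N s p lev sig m, 0).
Proof.
  intros Hinj. unfold cidx at 1, Tmap. destruct (lev m) as [[i j] k] eqn:El. simpl.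
  destruct (excluded_middle_informative _) as [H|H].
  - destruct (constructive_indefinite_description _ H) as [m' Hm']; simpl.
    assert (m' = m) as -> by (apply Hinj; rewrite Hm', El; reflexivity). reflexivity.
  - exfalso; apply H; eauto.
Qed.

Lemma Tmap_out d N s p lev sig c i j k : (forall m, lev m <> (i, j, k)) -> Tmap d N s p lev sig c i j k = C0.
Proof. intros H. unfold Tmap. destruct (excluded_middle_informative _) as [[m Hm]|_]; [exfalso; eapply H; eauto|reflexivity]. Qed.

Lemma Tmap_cases d N s p lev sig c i j k : lev_inj lev ->
  (exists m, lev m = (i, j, k) /\ Tmap d N s p lev sig c i j k = Cmul (cidx c (sig m)) (rho d N s p lev sig m, 0))
  \/ ((forall m, lev m <> (i, j, k)) /\ Tmap d N s p lev sig c i j k = C0).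
Proof.
  intros Hinj. destruct (classic (exists m, lev m = (i, j, k))) as [[m Hm]|H].
  - left. exists m. split; auto. pose proof (Tmap_lev d N s p lev sig c m Hinj) as E. rewrite Hm in E. exact E.
  - right. split. intros m Hm; apply H; eauto. apply Tmap_out. intros m Hm; apply H; eauto.
Qed.

Lemma cw_Tmap d N s p lev sig c m : lev_inj lev ->
  cw s p (Tmap d N s p lev sig c) (fst (fst (lev m))) (jof (lev m)) (snd (lev m)) =
  cw s p c (fst (fst (sig m))) (jof (sig m)) (snd (sig m)) * Rpower 2 (- INR m).
Proof.
  intros Hinj. unfold cw. pose proof (Tmap_lev d N s p lev sig c m Hinj) as E. unfold cidx in E. unfold jof.
  rewrite E. rewrite Cmod_real_mul by (left; apply rho_pos). unfold rho, jof.
  field_simplify. reflexivity. pose proof (wt_pos d s p (snd (fst (lev m)))). lra.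
Qed.

Lemma level_single' {d N} s p (c : Coef d N) j i0 k0 : Exp_pos p ->
  (forall i k, (i, k) <> (i0, k0) -> c i j k = C0) ->
  level d N s p c j = Some (levval d N s p c j) /\ levval d N s p c j = cw s p c i0 j k0.
Proof. intros Hp H. pose proof (level_single s p c j i0 k0 Hp H) as E. unfold levval; rewrite E; auto. Qed.

Lemma Tmap_levval d N s p lev sig c m : Exp_pos p -> lev_inj lev ->
  level d N s p (Tmap d N s p lev sig c) (jof (lev m)) = Some (levval d N s p (Tmap d N s p lev sig c) (jof (lev m))) /\
  levval d N s p (Tmap d N s p lev sig c) (jof (lev m)) = cw s p c (fst (fst (sig m))) (jof (sig m)) (snd (sig m)) * Rpower 2 (- INR m).
Proof.
  intros Hp Hinj. rewrite <- (cw_Tmap d N s p lev sig c m Hinj). apply level_single'; auto.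
  intros i k Hne. destruct (Tmap_cases d N s p lev sig c i (jof (lev m)) k Hinj) as [[m' [Hm' _]]|[_ E]]; auto.
  exfalso. assert (m' = m) as -> by (apply Hinj; rewrite Hm'; reflexivity).
  apply Hne. destruct (lev m) as [[a b] e]; inversion Hm'; subst; reflexivity.
Qed.

Lemma Tmap_levval0 d N s p lev sig c j (i0 : Fin.t N) : Exp_pos p -> lev_inj lev -> (forall m, jof (lev m) <> j) ->
  level d N s p (Tmap d N s p lev sig c) j = Some (levval d N s p (Tmap d N s p lev sig c) j) /\
  levval d N s p (Tmap d N s p lev sig c) j = 0.
Proof.
  intros Hp Hinj Hj.
  assert (Hz : forall i k, Tmap d N s p lev sig c i j k = C0).
  { intros i k. apply Tmap_out. intros m Hm. apply (Hj m). rewrite Hm; reflexivity. }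
  destruct (level_single' s p (Tmap d N s p lev sig c) j i0 (zv d) Hp) as [E1 E2].
  - intros; apply Hz.
  - split; auto. rewrite E2. unfold cw. rewrite Hz, Cmod_C0. ring.
Qed.

Lemma fsum_le {T} (f g : T -> R) l : (forall x, In x l -> f x <= g x) -> fsum f l <= fsum g l.
Proof. induction l; simpl; intros H; [lra|]. pose proof (H a (or_introl eq_refl)). assert (fsum f l <= fsum g l) by (apply IHl; auto). lra. Qed.
Lemma fsum_scal {T} (a : R) (f : T -> R) l : fsum (fun x => a * f x) l = a * fsum f l.
Proof. induction l; simpl; [ring|]. rewrite IHl; ring. Qed.
Lemma geom_sum a n : 0 <= a < 1 -> fsum (fun m => a ^ m) (seq 0 n) <= / (1 - a).
Proof.
  intros Ha. assert (E : fsum (fun m => a ^ m) (seq 0 n) * (1 - a) = 1 - a ^ n).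
  { induction n; [simpl; ring|]. rewrite seq_S, fsum_app. simpl. rewrite Rmult_plus_distr_r, IHn. ring. }
  assert (0 <= a ^ n) by (apply pow_le; lra).
  assert (0 < 1 - a) by lra. apply (Rmult_le_reg_r (1 - a)); auto. rewrite E, Rinv_l by lra. lra.
Qed.

Definition Kq (q : Exp) : R := match q with ExpF r => rpow (/ (1 - Rpower 2 (- r))) (/ r) | ExpInf => 1 end.
Lemma Kq_ge0 q : 0 <= Kq q.
Proof. destruct q; simpl; [apply rpow_ge0|lra]. Qed.

Lemma T_bnorm d N s p q lev sig (c : Coef d N) M (i0 : Fin.t N) : Exp_pos p -> Exp_pos q -> lev_inj lev -> 0 <= M ->
  (forall i j k, cw s p c i j k <= M) ->
  exists B, bnorm d N s p q (Tmap d N s p lev sig c) = Some B /\ B <= M * Kq q.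
Proof.
  intros Hp Hq Hinj HM Hc.
  set (T := Tmap d N s p lev sig c).
  assert (Hl : forall j, level d N s p T j = Some (levval d N s p T j) /\ 0 <= levval d N s p T j /\
                 (levval d N s p T j <> 0 -> exists m, jof (lev m) = j) /\ levval d N s p T j <= M).
  { intros j. destruct (classic (exists m, jof (lev m) = j)) as [[m <-]|H].
    - destruct (Tmap_levval d N s p lev sig c m Hp Hinj) as [E1 E2]. fold T in E1, E2. split; [exact E1|]. rewrite E2.
      pose proof (cw_ge0 s p c (fst (fst (sig m))) (jof (sig m)) (snd (sig m))).
      assert (0 < Rpower 2 (- INR m) <= 1).
      { split. unfold Rpower; apply exp_pos. rewrite <- (Rpower_O 2) by lra. apply Rle_Rpower; [lra|]. pose proof (pos_INR m); lra. }
      split. nra. split. eauto. specialize (Hc (fst (fst (sig m))) (jof (sig m)) (snd (sig m))). nra.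
    - destruct (Tmap_levval0 d N s p lev sig c j i0 Hp Hinj) as [E1 E2]. intros m Hm; apply H; eauto.
      fold T in E1, E2. split; [exact E1|]. rewrite E2. repeat split; auto; try lra. }
  destruct q as [r|]; simpl in Hq |- *.
  - set (a := Rpower 2 (- r)).
    assert (Ha : 0 < a < 1).
    { split. unfold a, Rpower; apply exp_pos. unfold a. rewrite <- (Rpower_O 2) by lra.
      unfold Rpower. apply exp_increasing. assert (0 < ln 2) by (pose proof ln_lt_2; lra). nra. }
    destruct (bnorm_ubF s p r T (levval d N s p T) (fun m => jof (lev m)) (rpow M r * / (1 - a))) as [B [EB HB]]; auto.
    + intros j; apply Hl.
    + intros j; apply Hl.
    + intros j; apply Hl.
    + intros n. eapply Rle_trans.
      * apply (fsum_le _ (fun m => rpow M r * a ^ m)). intros m _.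
        destruct (Tmap_levval d N s p lev sig c m Hp Hinj) as [_ E2]. fold T in E2. rewrite E2.
        pose proof (cw_ge0 s p c (fst (fst (sig m))) (jof (sig m)) (snd (sig m))).
        assert (0 < Rpower 2 (- INR m)) by (unfold Rpower; apply exp_pos).
        eapply Rle_trans. apply rpow_le; auto. split. nra.
        apply Rmult_le_compat_r. lra. apply (Hc (fst (fst (sig m))) (jof (sig m)) (snd (sig m))).
        rewrite rpow_mul by lra. right. f_equal. rewrite rpow_pos by auto. unfold a.
        rewrite Rpower_mult. rewrite <- Rpower_pow by (unfold Rpower; apply exp_pos).
        rewrite Rpower_mult. f_equal. ring.
      * rewrite fsum_scal. apply Rmult_le_compat_l. apply rpow_ge0. apply geom_sum. lra.
    + exists B. split; auto. eapply Rle_trans; [exact HB|]. right.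
      rewrite rpow_mul. rewrite rpow_inv; auto. apply rpow_ge0. left; apply Rinv_0_lt_compat; lra.
  - destruct (bnorm_ubI s p T (levval d N s p T) M) as [B [EB HB]].
    + intros j; apply Hl.
    + intros j; apply Hl.
    + exists B; split; auto. lra.
Qed.

Lemma Tmap_add d N s p lev sig a b :
  Tmap d N s p lev sig (cadd d N a b) = cadd d N (Tmap d N s p lev sig a) (Tmap d N s p lev sig b).
Proof.
  apply functional_extensionality; intros i; apply functional_extensionality; intros j; apply functional_extensionality; intros k.
  unfold cadd, Tmap. destruct (excluded_middle_informative _).
  - unfold cidx, cadd. destruct (a _ _ _), (b _ _ _). unfold Cmul, Cadd; simpl. f_equal; ring.
  - unfold Cadd, C0; simpl; f_equal; ring.
Qed.
Lemma Tmap_scal d N s p lev sig z a :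
  Tmap d N s p lev sig (cscal d N z a) = cscal d N z (Tmap d N s p lev sig a).
Proof.
  apply functional_extensionality; intros i; apply functional_extensionality; intros j; apply functional_extensionality; intros k.
  unfold cscal, Tmap. destruct (excluded_middle_informative _).
  - unfold cidx, cscal. destruct z, (a _ _ _). unfold Cmul; simpl. f_equal; ring.
  - destruct z. unfold Cmul, C0; simpl; f_equal; ring.
Qed.
Lemma Tmap_sub d N s p lev sig a b :
  Tmap d N s p lev sig (csub d N a b) = csub d N (Tmap d N s p lev sig a) (Tmap d N s p lev sig b).
Proof.
  apply functional_extensionality; intros i; apply functional_extensionality; intros j; apply functional_extensionality; intros k.
  unfold csub, Tmap. destruct (excluded_middle_informative _).
  - unfold cidx, csub. destruct (a _ _ _), (b _ _ _). unfold Cmul, Cadd, Copp; simpl. f_equal; ring.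
  - unfold Cadd, Copp, C0; simpl; f_equal; ring.
Qed.
Lemma Tmap_zero d N s p lev sig : Tmap d N s p lev sig (czero d N) = czero d N.
Proof.
  apply functional_extensionality; intros i; apply functional_extensionality; intros j; apply functional_extensionality; intros k.
  unfold Tmap. destruct (excluded_middle_informative _); [|reflexivity]. unfold cidx, czero. apply Cmul_C0_l.
Qed.

Definition sig_ok {d N} (sig : nat -> Fin.t N * nat * Zvec d) := forall t n, exists m, (n <= m)%nat /\ sig m = t.

Lemma Tmap_inj d N s p lev sig c : lev_inj lev -> sig_ok sig ->
  Tmap d N s p lev sig c = czero d N -> c = czero d N.
Proof.
  intros Hinj Hsig E.
  apply functional_extensionality; intros i; apply functional_extensionality; intros j; apply functional_extensionality; intros k.
  destruct (Hsig (i, j, k) 0%nat) as [m [_ Hm]].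
  pose proof (Tmap_lev d N s p lev sig c m Hinj) as H. rewrite E in H. unfold cidx at 1 in H. unfold czero in H.
  rewrite Hm in H. unfold cidx in H; simpl in H.
  assert (Cmod (Cmul (c i j k) (rho d N s p lev sig m, 0)) = 0) by (rewrite <- H; apply Cmod_C0).
  rewrite Cmod_real_mul in H0 by (left; apply rho_pos). pose proof (rho_pos d N s p lev sig m).
  apply Cmod_eq0. unfold czero. destruct (Rmult_integral _ _ H0); auto. lra.
Qed.

Definition lev_ok {d N} (psi : Fin.t N -> Rvec d -> Cpx) x0 (Cc : R) (lev : nat -> Fin.t N * nat * Zvec d) :=
  lev_inj lev /\ (forall m, (m * m <= jof (lev m))%nat) /\
  forall m, Cmod (wav d N psi (fst (fst (lev m))) (jof (lev m)) (snd (lev m)) x0) >= Cc.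

Lemma Tmap_Pm d N (psi : Fin.t N -> Rvec d -> Cpx) s p x0 Cc lev sig c t0 :
  0 < Cc -> lev_ok psi x0 Cc lev -> sig_ok sig -> cidx c t0 <> C0 ->
  forall m', Pm psi s p x0 (Tmap d N s p lev sig c) m'.
Proof.
  intros HCc [Hinj [Hsq Hpsi]] Hsig Hc m'.
  assert (Hcm : 0 < Cmod (cidx c t0)).
  { pose proof (Cmod_ge0 (cidx c t0)). destruct H; auto. exfalso; apply Hc, Cmod_eq0; auto. }
  exists (Cmod (cidx c t0) * wt d s p (jof t0) * Cc). split.
  { pose proof (wt_pos d s p (jof t0)). apply Rmult_lt_0_compat; auto. nra. }
  intros n. destruct (Hsig t0 (Nat.max n (S m'))) as [m [Hm Hsm]].
  exists (fst (fst (lev m))), (jof (lev m)), (snd (lev m)).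
  split. { specialize (Hsq m). nia. }
  pose proof (Tmap_lev d N s p lev sig c m Hinj) as E. unfold cidx at 1 in E. unfold jof in *. rewrite E. rewrite Hsm.
  rewrite Cmod_mul, Cmod_real_mul by (left; apply rho_pos).
  specialize (Hpsi m). set (j := snd (fst (lev m))) in *.
  set (P := Cmod (wav d N psi (fst (fst (lev m))) j (snd (lev m)) x0)) in *.
  assert (Hrho : rho d N s p lev sig m >= wt d s p (jof t0) * Rpower 2 ((gam d s p - / INR (S m')) * INR j)).
  { unfold rho, jof. rewrite Hsm. fold j. unfold Rdiv. rewrite Rmult_assoc. apply Rle_ge. apply Rmult_le_compat_l. left; apply wt_pos.
    unfold wt. rewrite <- Rpower_Ropp. rewrite <- Rpower_plus. apply Rle_Rpower. lra.
    assert (HmR : INR (S m') <= INR m) by (apply le_INR; lia).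
    assert (Hj : INR m * INR m <= INR j) by (rewrite <- mult_INR; apply le_INR; apply Hsq).
    assert (0 < INR (S m')) by (apply lt_0_INR; lia).
    assert (INR m <= / INR (S m') * INR j).
    { apply (Rmult_le_reg_l (INR (S m'))); auto. rewrite <- Rmult_assoc, Rinv_r by lra. nra. }
    lra. }
  assert (0 < wt d s p (jof t0)) by apply wt_pos.
  assert (0 < Rpower 2 ((gam d s p - / INR (S m')) * INR j)) by (unfold Rpower; apply exp_pos).
  apply Rle_ge. unfold jof in *.
  set (Cm := Cmod (cidx c t0)) in *. set (w := wt d s p (snd (fst t0))) in *.
  set (Rp := Rpower 2 ((gam d s p - / INR (S m')) * INR j)) in *.
  pose proof (rho_pos d N s p lev sig m). set (rh := rho d N s p lev sig m) in *.
  assert (Cm * (w * Rp) <= Cm * rh) by (apply Rmult_le_compat_l; lra).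
  assert (0 <= Cm * rh) by nra.
  assert (Cm * rh * Cc <= Cm * rh * P) by (apply Rmult_le_compat_l; lra).
  nra.
Qed.

Lemma surj_fin N (i0 : Fin.t N) : exists e : nat -> Fin.t N, forall i, exists n, e n = i.
Proof.
  exists (fun n => match lt_dec n N with left H => Fin.of_nat_lt H | right _ => i0 end).
  intros i. exists (proj1_sig (Fin.to_nat i)). destruct (lt_dec _ N) as [H|H].
  - rewrite (Fin.of_nat_ext H (proj2_sig (Fin.to_nat i))). apply Fin.of_nat_to_nat_inv.
  - exfalso; apply H; apply (proj2_sig (Fin.to_nat i)).
Qed.

Lemma surj_Z : exists e : nat -> Z, forall z, exists n, e n = z.
Proof.
  exists (fun n => (Z.of_nat (fst (Cantor.of_nat n)) - Z.of_nat (snd (Cantor.of_nat n)))%Z).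
  intros z. destruct (Z.le_gt_cases 0 z).
  - exists (Cantor.to_nat (Z.to_nat z, 0%nat)). rewrite Cantor.cancel_of_to. simpl. lia.
  - exists (Cantor.to_nat (0%nat, Z.to_nat (- z))). rewrite Cantor.cancel_of_to. simpl. lia.
Qed.

Lemma surj_Zvec d : exists e : nat -> Zvec d, forall z, exists n, e n = z.
Proof.
  induction d as [|d IH].
  - exists (fun _ => tt). intros []. exists 0%nat; reflexivity.
  - destruct IH as [e He]. destruct surj_Z as [ez Hez].
    exists (fun n => (ez (fst (Cantor.of_nat n)), e (snd (Cantor.of_nat n)))).
    intros [z v]. destruct (Hez z) as [a Ha]. destruct (He v) as [b Hb].
    exists (Cantor.to_nat (a, b)). rewrite Cantor.cancel_of_to. simpl. rewrite Ha, Hb; reflexivity.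
Qed.

Lemma exists_sig d N (i0 : Fin.t N) : exists sig : nat -> Fin.t N * nat * Zvec d, sig_ok sig.
Proof.
  destruct (surj_fin N i0) as [ef Hef]. destruct (surj_Zvec d) as [ez Hez].
  set (e0 := fun n => (ef (fst (Cantor.of_nat n)), fst (Cantor.of_nat (snd (Cantor.of_nat n))),
                       ez (snd (Cantor.of_nat (snd (Cantor.of_nat n)))))).
  assert (He0 : forall t, exists a, e0 a = t).
  { intros [[i j] k]. destruct (Hef i) as [a Ha]. destruct (Hez k) as [b Hb].
    exists (Cantor.to_nat (a, Cantor.to_nat (j, b))). unfold e0. rewrite Cantor.cancel_of_to. cbn [fst snd]. rewrite Cantor.cancel_of_to. cbn [fst snd].
    rewrite Ha, Hb. reflexivity. }
  exists (fun m => e0 (fst (Cantor.of_nat m))). intros t n. destruct (He0 t) as [a Ha].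
  exists (Cantor.to_nat (a, n)). rewrite Cantor.cancel_of_to. simpl. split; auto.
  pose proof (Cantor.to_nat_non_decreasing a n). lia.
Qed.

Lemma exists_lev d N (psi : Fin.t N -> Rvec d -> Cpx) x0 : dyadic_covering d N psi ->
  exists Cc lev, 0 < Cc /\ lev_ok psi x0 Cc lev.
Proof.
  intros Hcov. destruct (covering_levels d N psi x0 Hcov) as [Cc [L [HC H]]].
  assert (Hs : forall m, {t : Fin.t N * nat * Zvec d | (m * m * (L + 1) < jof t <= m * m * (L + 1) + L)%nat /\
      Cmod (wav d N psi (fst (fst t)) (jof t) (snd t) x0) >= Cc}).
  { intros m. apply constructive_indefinite_description. destruct (H (m * m * (L + 1))%nat) as [i [j [k Hk]]].
    exists (i, j, k). exact Hk. }
  exists Cc, (fun m => proj1_sig (Hs m)). split; auto. split; [|split].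
  - intros m m' E. pose proof (proj1 (proj2_sig (Hs m))). pose proof (proj1 (proj2_sig (Hs m'))).
    rewrite E in H0. destruct (Nat.lt_trichotomy m m') as [Hl|[Hl|Hl]]; auto; exfalso.
    + assert (S m * S m <= m' * m')%nat by nia. nia.
    + assert (S m' * S m' <= m * m)%nat by nia. nia.
  - intros m. pose proof (proj1 (proj2_sig (Hs m))). nia.
  - intros m. exact (proj2 (proj2_sig (Hs m))).
Qed.

Lemma single_bnorm {d N} s p q (c : Coef d N) i j k : Exp_pos p -> Exp_pos q ->
  (forall i' j' k', (i', j', k') <> (i, j, k) -> c i' j' k' = C0) ->
  exists B, bnorm d N s p q c = Some B /\ B <= cw s p c i j k.
Proof.
  intros Hp Hq Hz.
  assert (Hl : forall j', level d N s p c j' = Some (levval d N s p c j') /\ levval d N s p c j' = cw s p c i j' k).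
  { intros j'. apply level_single'; auto. intros i' k' Hne. apply Hz. intros E; inversion E; subst; auto. }
  assert (H0 : forall j', j' <> j -> levval d N s p c j' = 0).
  { intros j' Hj. rewrite (proj2 (Hl j')). unfold cw. rewrite Hz, Cmod_C0. ring. intros E; inversion E; auto. }
  destruct q as [r|]; simpl in Hq.
  - destruct (bnorm_ubF s p r c (levval d N s p c) (fun m => (j + m)%nat) (rpow (levval d N s p c j) r)) as [B [EB HB]]; auto.
    + intros j'; apply Hl.
    + intros j'; rewrite (proj2 (Hl j')); apply cw_ge0.
    + intros j' Hj'. destruct (Nat.eq_dec j' j) as [->|Hne]. exists 0%nat; lia.
      exfalso; apply Hj'; auto.
    + intros n. eapply Rle_trans. apply (fsum_incl _ (seq 0 n) (0%nat :: nil)).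
      * intros; apply rpow_ge0.
      * apply seq_NoDup.
      * intros x _ Hx. destruct x; [left; auto|]. exfalso; apply Hx. rewrite H0 by lia. apply rpow_0.
      * simpl. rewrite Nat.add_0_r. lra.
    + exists B. split; auto. rewrite rpow_inv in HB; auto. rewrite <- (proj2 (Hl j)); auto.
      rewrite (proj2 (Hl j)); apply cw_ge0.
  - destruct (bnorm_ubI s p c (levval d N s p c) (levval d N s p c j)) as [B [EB HB]].
    + intros j'; apply Hl.
    + intros j'. destruct (Nat.eq_dec j' j) as [->|Hne]. lra. rewrite H0 by auto. rewrite (proj2 (Hl j)); apply cw_ge0.
    + exists B; split; auto. rewrite <- (proj2 (Hl j)); auto.
Qed.

Definition Oset d N psi s p q x0 (tau : nat -> R) (n : nat) (c : Coef d N) : Prop :=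
  in_b d N s p q c /\ exists i j k, (n <= j)%nat /\ Cmod (Cmul (c i j k) (wav d N psi i j k x0)) > tau j.

Lemma Cmul_diff a b z : Cadd (Cmul a z) (Copp (Cmul b z)) = Copp (Cmul (Cadd b (Copp a)) z).
Proof. destruct a, b, z; unfold Cadd, Copp, Cmul; simpl; f_equal; ring. Qed.

Lemma Oset_open d N psi s p q x0 tau n Mp : Exp_pos p -> Exp_pos q -> 0 <= Mp ->
  (forall i y, Cmod (psi i y) <= Mp) ->
  openE (in_b d N s p q) (bnear d N s p q) (Oset d N psi s p q x0 tau n).
Proof.
  intros Hp Hq HMp HM. split; [intros c [H _]; auto|].
  intros c [Hc [i [j [k [Hj Hgt]]]]].
  set (a := Cmod (Cmul (c i j k) (wav d N psi i j k x0))) in *.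
  exists ((a - tau j) * wt d s p j / (Mp + 1)). split.
  { pose proof (wt_pos d s p j). unfold Rdiv. apply Rmult_lt_0_compat; [nra|apply Rinv_0_lt_compat; lra]. }
  intros y Hy [r [Er Hr]]. split; auto. exists i, j, k. split; auto.
  pose proof (in_b_coef s p q (csub d N y c) r Hp Hq Er i j k) as Hcw. unfold cw, csub in Hcw.
  pose proof (Cmod_sub_ge (Cmul (c i j k) (wav d N psi i j k x0)) (Cmul (y i j k) (wav d N psi i j k x0))) as Ht.
  rewrite Cmul_diff, Cmod_opp, (Cmod_mul (Cadd _ _)) in Ht. fold a in Ht.
  pose proof (HM i (dil_sub d (2 ^ j) x0 k)) as Hps. unfold wav in *.
  set (e := Cmod (Cadd (y i j k) (Copp (c i j k)))) in *.
  set (P := Cmod (psi i (dil_sub d (2 ^ j) x0 k))) in *.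
  assert (0 <= e) by apply Cmod_ge0. assert (0 <= P) by apply Cmod_ge0.
  pose proof (wt_pos d s p j).
  assert (e < (a - tau j) / (Mp + 1)).
  { apply (Rmult_lt_reg_r (wt d s p j)); auto. unfold Rdiv in *. lra. }
  assert (e * P <= e * Mp) by (apply Rmult_le_compat_l; lra).
  assert (e * Mp <= (a - tau j) / (Mp + 1) * Mp) by (apply Rmult_le_compat_r; lra).
  assert ((a - tau j) / (Mp + 1) * Mp < a - tau j).
  { unfold Rdiv. assert (Mp * / (Mp + 1) < 1). { apply (Rmult_lt_reg_r (Mp + 1)); [lra|]. rewrite Rmult_assoc, Rinv_l by lra. lra. }
    assert (0 < a - tau j) by lra. nra. }
  lra.
Qed.

Definition tauk d s p (k : nat) (j : nat) : R := Rpower 2 ((gam d s p - / INR (S k)) * INR j).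

Lemma Oset_dense d N psi s p q x0 Cc lev k : Exp_pos p -> Exp_pos q -> 0 < Cc -> lev_ok psi x0 Cc lev ->
  denseE (in_b d N s p q) (bnear d N s p q) (Oset d N psi s p q x0 (tauk d s p k) k).
Proof.
  intros Hp Hq HCc [Hinj [Hsq Hpsi]] x Hx eps Heps.
  assert (Hdel : 0 < / INR (S k)) by (apply Rinv_0_lt_compat, lt_0_INR; lia).
  destruct (Rpower2_unbounded (/ INR (S k)) (3 / (Cc * eps)) Hdel) as [J0 HJ0].
  set (m := Nat.max k J0).
  destruct (lev m) as [[i j] k'] eqn:El.
  assert (Hjm : (m <= j)%nat). { specialize (Hsq m). rewrite El in Hsq. unfold jof in Hsq; simpl in Hsq. nia. }
  specialize (Hpsi m). rewrite El in Hpsi. unfold jof in Hpsi; simpl in Hpsi.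
  set (ps := wav d N psi i j k' x0) in *.
  set (tau := tauk d s p k j).
  assert (Htau : 0 < tau) by (unfold tau, tauk, Rpower; apply exp_pos).
  assert (Hps : 0 < Cmod ps) by lra.
  set (b := if Rlt_dec tau (Cmod (Cmul (x i j k') ps)) then C0 else (3 * tau / Cmod ps, 0)).
  set (y := fun i' j' k'' => if excluded_middle_informative ((i', j', k'') = (i, j, k')) then Cadd (x i j k') b else x i' j' k'').
  assert (Hyo : forall i' j' k'', (i', j', k'') <> (i, j, k') -> y i' j' k'' = x i' j' k'').
  { intros i' j' k'' H. unfold y. destruct (excluded_middle_informative _); [contradiction|auto]. }
  assert (Hyp : y i j k' = Cadd (x i j k') b).
  { unfold y. destruct (excluded_middle_informative _) as [_|n]; [auto|exfalso; apply n; auto]. }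
  exists y. split; [split|].
  - apply (in_b_mod s p q x y i j k'); auto.
  - exists i, j, k'. split; [lia|]. rewrite Hyp. fold ps. change (tauk d s p k j) with tau. unfold b. destruct (Rlt_dec _ _) as [Hlt|Hge].
    + replace (Cadd (x i j k') C0) with (x i j k') by (destruct (x i j k'); unfold Cadd, C0; simpl; f_equal; ring). lra.
    + set (bb := (3 * tau / Cmod ps, 0)).
      assert (E : Cmul bb ps = Cadd (Cmul (Cadd (x i j k') bb) ps) (Copp (Cmul (x i j k') ps))).
      { destruct (x i j k'), bb, ps; unfold Cmul, Cadd, Copp; simpl; f_equal; ring. }
      pose proof (Cmod_add (Cmul (Cadd (x i j k') bb) ps) (Copp (Cmul (x i j k') ps))) as Ht.
      rewrite <- E, Cmod_opp in Ht. rewrite Cmod_mul in Ht. unfold bb in *. rewrite Cmod_real in Ht.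
      rewrite Rabs_pos_eq in Ht by (unfold Rdiv; apply Rmult_le_pos; [lra|left; apply Rinv_0_lt_compat; lra]).
      replace (3 * tau / Cmod ps * Cmod ps) with (3 * tau) in Ht by (field; lra). apply Rnot_lt_le in Hge. lra.
  - set (z := csub d N y x).
    assert (Hz : forall i' j' k'', (i', j', k'') <> (i, j, k') -> z i' j' k'' = C0).
    { intros i' j' k'' H. unfold z, csub. rewrite Hyo by auto. apply Cadd_opp_r. }
    destruct (single_bnorm s p q z i j k' Hp Hq Hz) as [B [EB HB]].
    exists B. split; auto. eapply Rle_lt_trans; [exact HB|].
    unfold cw, z, csub. rewrite Hyp.
    replace (Cadd (Cadd (x i j k') b) (Copp (x i j k'))) with b by (destruct (x i j k'), b; unfold Cadd, Copp; simpl; f_equal; ring).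
    assert (Hwt : tau * wt d s p j = / Rpower 2 (/ INR (S k) * INR j)).
    { unfold tau, tauk, wt. rewrite <- Rpower_plus. rewrite <- Rpower_Ropp. f_equal. ring. }
    assert (HA : 3 / (Cc * eps) < Rpower 2 (/ INR (S k) * INR j)) by (apply HJ0; lia).
    assert (Hpw : 0 < Rpower 2 (/ INR (S k) * INR j)) by (unfold Rpower; apply exp_pos).
    assert (Hsmall : 3 * (tau * wt d s p j) < Cc * eps).
    { rewrite Hwt. set (P := Rpower 2 (/ INR (S k) * INR j)) in *.
      assert (Hce : 0 < Cc * eps) by nra.
      assert (3 < Cc * eps * P).
      { apply (Rmult_lt_compat_l (Cc * eps)) in HA; auto. replace (Cc * eps * (3 / (Cc * eps))) with 3 in HA by (field; lra). lra. }
      apply (Rmult_lt_reg_r P); auto. replace (3 * / P * P) with 3 by (field; lra). lra. }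
    pose proof (wt_pos d s p j).
    unfold b. destruct (Rlt_dec _ _).
    + rewrite Cmod_C0. lra.
    + rewrite Cmod_real, Rabs_pos_eq by (unfold Rdiv; apply Rmult_le_pos; [lra|left; apply Rinv_0_lt_compat; lra]).
      assert (3 * tau / Cmod ps * wt d s p j <= 3 * tau / Cc * wt d s p j).
      { apply Rmult_le_compat_r; [lra|]. unfold Rdiv. apply Rmult_le_compat_l; [lra|]. apply Rinv_le_contravar; lra. }
      assert (3 * tau / Cc * wt d s p j < eps).
      { unfold Rdiv. apply (Rmult_lt_reg_l Cc); auto. replace (Cc * (3 * tau * / Cc * wt d s p j)) with (3 * (tau * wt d s p j)) by (field; lra). lra. }
      lra.
Qed.

Lemma residual_part d N psi s p q x0 Cc lev Mp : Exp_pos p -> Exp_pos q -> 0 < Cc -> lev_ok psi x0 Cc lev ->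
  0 <= Mp -> (forall i y, Cmod (psi i y) <= Mp) ->
  residual (in_b d N s p q) (bnear d N s p q)
    (fun c => in_b d N s p q c /\ is_lub (div_set d N psi c x0) (gam d s p)).
Proof.
  intros Hp Hq HCc Hlev HMp HM.
  exists (fun k => Oset d N psi s p q x0 (tauk d s p k) k). split.
  - intros k. split. apply (Oset_open _ _ _ _ _ _ _ _ _ Mp); auto. eapply Oset_dense; eauto.
  - intros c Hc Hall. split; auto. destruct Hc as [B EB]. apply (D_of_Pm psi s p q x0 c B Mp); auto.
    intros m. exists 1. split; [lra|]. intros n.
    destruct (Hall (Nat.max n m)) as [_ [i [j [k [Hj Hgt]]]]]. exists i, j, k. split; [lia|].
    rewrite Rmult_1_l. left. eapply Rle_lt_trans; [|exact Hgt]. unfold tauk. apply Rle_Rpower; [lra|].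
    apply Rmult_le_compat_r; [apply pos_INR|]. apply Rplus_le_compat_l, Ropp_le_contravar.
    apply Rinv_le_contravar. apply lt_0_INR; lia. apply le_INR; lia.
Qed.

Ltac cext := apply functional_extensionality; intros ?i; apply functional_extensionality; intros ?j; apply functional_extensionality; intros ?k.

Lemma lc_app {d N} (l1 l2 : list (Cpx * Coef d N)) :
  lin_comb (czero d N) (cadd d N) (cscal d N) (l1 ++ l2) =
  cadd d N (lin_comb (czero d N) (cadd d N) (cscal d N) l1) (lin_comb (czero d N) (cadd d N) (cscal d N) l2).
Proof.
  induction l1 as [|ax l1 IH]; simpl.
  - cext. unfold cadd, czero. destruct (lin_comb _ _ _ l2 i j k). unfold Cadd, C0; simpl; f_equal; ring.
  - rewrite IH. cext. unfold cadd. destruct (cscal d N (fst ax) (snd ax) i j k), (lin_comb _ _ _ l1 i j k), (lin_comb _ _ _ l2 i j k).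
    unfold Cadd; simpl; f_equal; ring.
Qed.

Lemma lc_scal {d N} z (l : list (Cpx * Coef d N)) :
  lin_comb (czero d N) (cadd d N) (cscal d N) (map (fun ax => (Cmul z (fst ax), snd ax)) l) =
  cscal d N z (lin_comb (czero d N) (cadd d N) (cscal d N) l).
Proof.
  induction l as [|ax l IH]; simpl.
  - cext. unfold cscal, czero. destruct z. unfold Cmul, C0; simpl; f_equal; ring.
  - rewrite IH. cext. unfold cadd, cscal. destruct z, (fst ax), (snd ax i j k), (lin_comb _ _ _ l i j k).
    unfold Cadd, Cmul; simpl; f_equal; ring.
Qed.

Lemma lc_Tmap d N s p lev sig (l : list (Cpx * Coef d N)) :
  Tmap d N s p lev sig (lin_comb (czero d N) (cadd d N) (cscal d N) l) =
  lin_comb (czero d N) (cadd d N) (cscal d N) (map (fun ax => (fst ax, Tmap d N s p lev sig (snd ax))) l).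
Proof.
  induction l as [|ax l IH]; simpl. apply Tmap_zero. rewrite Tmap_add, Tmap_scal, IH. reflexivity.
Qed.

Lemma lc_single {d N} (b : Coef d N) : lin_comb (czero d N) (cadd d N) (cscal d N) (((1, 0), b) :: nil) = b.
Proof. simpl. cext. unfold cadd, cscal, czero. destruct (b i j k). unfold Cadd, Cmul, C0; simpl; f_equal; ring. Qed.

Lemma csub_zero {d N} (a b : Coef d N) : csub d N a b = czero d N -> a = b.
Proof.
  intros H. cext. assert (E := f_equal (fun f => f i j k) H). simpl in E. unfold csub, czero in E.
  destruct (a i j k), (b i j k). unfold Cadd, Copp, C0 in E. inversion E. f_equal; lra.
Qed.

Lemma Tmap_injective d N s p lev sig a b : lev_inj lev -> sig_ok sig ->
  Tmap d N s p lev sig a = Tmap d N s p lev sig b -> a = b.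
Proof.
  intros Hi Hs E. apply csub_zero. apply (Tmap_inj d N s p lev sig); auto.
  rewrite Tmap_sub, E. cext. unfold csub, czero. apply Cadd_opp_r.
Qed.

Definition Cinv (a : Cpx) : Cpx := (fst a / (fst a ^ 2 + snd a ^ 2), - snd a / (fst a ^ 2 + snd a ^ 2)).
Lemma Cinv_l a : a <> C0 -> Cmul (Cinv a) a = (1, 0).
Proof.
  intros H. destruct a as [x y]. unfold Cinv, Cmul; cbn [fst snd].
  assert (x ^ 2 + y ^ 2 <> 0).
  { intros E. apply H. assert (x = 0) by nra. assert (y = 0) by nra. subst; reflexivity. }
  f_equal; field; auto.
Qed.

Lemma cadd_rearr {d N} (X Y Z : Coef d N) : cadd d N (cadd d N X Y) Z = cadd d N X (cadd d N Z Y).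
Proof. cext. unfold cadd. destruct (X i j k), (Y i j k), (Z i j k). unfold Cadd; cbn [fst snd]; f_equal; ring. Qed.

Lemma solve_w a w L : Cadd L (Cmul a w) = C0 -> Cmul (Cinv a) a = (1, 0) -> w = Cmul (Copp (Cinv a)) L.
Proof.
  intros E Hi. destruct (Cinv a) as [b1 b2]. destruct a as [a1 a2], w as [w1 w2], L as [L1 L2].
  unfold Cadd, Cmul, Copp, C0 in *. cbn [fst snd] in *. injection E as E1 E2. injection Hi as H1 H2.
  assert (L1 = -(a1*w1 - a2*w2)) by lra. assert (L2 = -(a1*w2+a2*w1)) by lra. subst L1 L2. f_equal.
  - transitivity (w1 * (b1*a1 - b2*a2) - w2 * (b1*a2 + b2*a1)); [rewrite H1, H2; ring | ring].
  - transitivity (w2 * (b1*a1 - b2*a2) + w1 * (b1*a2 + b2*a1)); [rewrite H1, H2; ring | ring].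
Qed.

Lemma cadd_scal0 {d N} (X Y : Coef d N) : cadd d N X (cscal d N C0 Y) = X.
Proof. cext. unfold cadd, cscal. destruct (X i j k), (Y i j k). unfold Cadd, Cmul, C0; cbn [fst snd]; f_equal; ring. Qed.

Lemma lin_indep_add {d N} (A : Coef d N -> Prop) w :
  lin_indep (czero d N) (cadd d N) (cscal d N) A ->
  (forall l, (forall ax, In ax l -> A (snd ax)) -> w <> lin_comb (czero d N) (cadd d N) (cscal d N) l) ->
  lin_indep (czero d N) (cadd d N) (cscal d N) (fun x => A x \/ x = w).
Proof.
  intros HA Hw l Hnd Hin Hz.
  destruct (classic (In w (map snd l))) as [Hwin|Hwn].
  - apply in_map_iff in Hwin. destruct Hwin as [[a w'] [Ew Hax]]. simpl in Ew; subst w'.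
    destruct (in_split _ _ Hax) as [l1 [l2 El]]. subst l.
    rewrite map_app in Hnd. simpl in Hnd. apply NoDup_remove in Hnd. destruct Hnd as [Hnd Hnw].
    assert (Hrest : forall ax, In ax (l1 ++ l2) -> A (snd ax)).
    { intros ax Hx. destruct (Hin ax) as [H|H]. apply in_or_app. apply in_app_or in Hx. destruct Hx; [left|right; right]; auto.
      auto. exfalso. apply Hnw. rewrite <- map_app. rewrite <- H. apply in_map; auto. }
    assert (Hsplit : cadd d N (lin_comb (czero d N) (cadd d N) (cscal d N) (l1 ++ l2)) (cscal d N a w) = czero d N).
    { transitivity (lin_comb (czero d N) (cadd d N) (cscal d N) (l1 ++ (a, w) :: l2)); [|exact Hz].
      rewrite !lc_app.
      change (lin_comb (czero d N) (cadd d N) (cscal d N) ((a, w) :: l2)) with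
        (cadd d N (cscal d N a w) (lin_comb (czero d N) (cadd d N) (cscal d N) l2)).
      apply cadd_rearr. }
    assert (Ha : a = C0).
    { destruct (classic (a = C0)) as [|Hne]; auto. exfalso.
      apply (Hw (map (fun ax => (Cmul (Copp (Cinv a)) (fst ax), snd ax)) (l1 ++ l2))).
      { intros ax Hx. apply in_map_iff in Hx. destruct Hx as [ay [<- Hy]]. simpl. auto. }
      rewrite lc_scal. cext. assert (E := f_equal (fun f => f i j k) Hsplit). cbv beta in E.
      change (cadd d N ?X ?Y i j k) with (Cadd (X i j k) (Y i j k)) in E.
      change (cscal d N ?z ?X i j k) with (Cmul z (X i j k)) in E |- *.
      apply solve_w; auto. apply Cinv_l; auto. }
    subst a.
    assert (Hz' : lin_comb (czero d N) (cadd d N) (cscal d N) (l1 ++ l2) = czero d N).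
    { rewrite <- (cadd_scal0 _ w). exact Hsplit. }
    intros ax Hx. apply in_app_or in Hx. destruct Hx as [Hx|[Hx|Hx]].
    + apply (HA (l1 ++ l2)); auto. rewrite map_app; auto. apply in_or_app; auto.
    + subst ax; reflexivity.
    + apply (HA (l1 ++ l2)); auto. rewrite map_app; auto. apply in_or_app; auto.
  - apply (HA l); auto. intros ax Hx. destruct (Hin ax Hx) as [H|H]; auto.
    exfalso; apply Hwn. rewrite <- H. apply in_map; auto.
Qed.

Lemma hamel_exists {d N} (E : Coef d N -> Prop) :
  exists BE, hamel_basis (czero d N) (cadd d N) (cscal d N) BE E.
Proof.
  set (P := fun A : Coef d N -> Prop => (forall x, A x -> E x) /\ lin_indep (czero d N) (cadd d N) (cscal d N) A).
  destruct (@classical_sets.Zorn_bigcup _ P) as [A [[HAE HAi] Hmax]].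
  - intros F HF Htot. split.
    + intros x [X HX Hx]. apply (proj1 (HF X HX)); auto.
    + intros l Hnd Hin.
      assert (Hone : l = nil \/ exists X, F X /\ forall ax, In ax l -> X (snd ax)).
      { clear Hnd. induction l as [|ax l IH]; [left; auto|right].
        destruct (Hin ax (or_introl eq_refl)) as [X HX Hx].
        destruct IH as [->|[Y [HY HYl]]]. intros ay Hy; apply Hin; right; auto.
        - exists X. split; auto. intros ay [<-|[]]; auto.
        - destruct (Htot X Y HX HY) as [S|S].
          + exists Y. split; auto. intros ay [<-|Hy]; auto.
          + exists X. split; auto. intros ay [<-|Hy]; auto. }
      destruct Hone as [->|[X [HX HXl]]]. intros _ ax [].
      apply (proj2 (HF X HX)); auto.
  - exists A. split; [auto|split; auto].
    intros w Hw. apply NNPP. intros Hn.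
    assert (Hw' : forall l, (forall ax, In ax l -> A (snd ax)) -> w <> lin_comb (czero d N) (cadd d N) (cscal d N) l).
    { intros l Hl Ew. apply Hn. exists l; auto. }
    apply (Hmax (fun x => A x \/ x = w)).
    + split. intros x Hx; left; auto. intros Hsub. pose proof (Hsub w (or_intror eq_refl)) as Hwa.
      apply (Hw' (((1,0), w) :: nil)). intros ax [<-|[]]; auto. rewrite lc_single; auto.
    + split. intros x [Hx| ->]; auto. apply lin_indep_add; auto.
Qed.

Lemma lc_bound {d N} s p (l : list (Cpx * Coef d N)) :
  (forall ax, In ax l -> exists M, forall i j k, cw s p (snd ax) i j k <= M) ->
  exists M, 0 <= M /\ forall i j k, cw s p (lin_comb (czero d N) (cadd d N) (cscal d N) l) i j k <= M.
Proof.
  induction l as [|[a x] l IH]; intros H.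
  - exists 0. split; [lra|]. intros i j k. unfold cw. simpl. unfold czero. rewrite Cmod_C0. lra.
  - destruct IH as [M2 [HM2 H2]]. intros ax Hx; apply H; right; auto.
    destruct (H (a, x) (or_introl eq_refl)) as [M1 H1]. simpl in H1.
    exists (Cmod a * Rmax 0 M1 + M2). split.
    { pose proof (Cmod_ge0 a). pose proof (Rmax_l 0 M1). nra. }
    intros i j k. unfold cw. simpl. change (cadd d N (cscal d N a x) (lin_comb (czero d N) (cadd d N) (cscal d N) l) i j k)
      with (Cadd (Cmul a (x i j k)) (lin_comb (czero d N) (cadd d N) (cscal d N) l i j k)).
    pose proof (Cmod_add (Cmul a (x i j k)) (lin_comb (czero d N) (cadd d N) (cscal d N) l i j k)).
    rewrite Cmod_mul in H0. specialize (H1 i j k). specialize (H2 i j k). unfold cw in H1, H2.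
    pose proof (wt_pos d s p j). pose proof (Cmod_ge0 a). pose proof (Cmod_ge0 (x i j k)).
    pose proof (Rmax_r 0 M1).
    assert (Cmod (x i j k) * wt d s p j <= Rmax 0 M1) by lra.
    assert (Cmod a * (Cmod (x i j k) * wt d s p j) <= Cmod a * Rmax 0 M1) by (apply Rmult_le_compat_l; lra).
    nra.
Qed.

Lemma NoDup_map_in {A B} (f : A -> B) (P : A -> Prop) l : (forall x, In x l -> P x) ->
  (forall x y, P x -> P y -> f x = f y -> x = y) -> NoDup l -> NoDup (map f l).
Proof.
  intros HP Hinj Hnd. induction Hnd as [|x l Hx Hnd IH]; simpl; constructor.
  - intros Hin. apply in_map_iff in Hin. destruct Hin as [y [Ey Hy]].
    assert (y = x) by (apply Hinj; auto; apply HP; simpl; auto). subst; contradiction.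
  - apply IH. intros; apply HP; simpl; auto.
Qed.

Lemma lineable_part d N psi s p q x0 Cc lev (sig : nat -> Fin.t N * nat * Zvec d) Mp (i0 : Fin.t N) :
  Exp_pos p -> Exp_pos q -> 0 < Cc -> lev_ok psi x0 Cc lev -> sig_ok sig ->
  0 <= Mp -> (forall i y, Cmod (psi i y) <= Mp) ->
  max_lineable_b d N s p q (fun c => in_b d N s p q c /\ is_lub (div_set d N psi c x0) (gam d s p)).
Proof.
  intros Hp Hq HCc Hlev Hsig HMp HM.
  pose proof Hlev as [Hinj _].
  set (T := Tmap d N s p lev sig).
  set (lc := lin_comb (czero d N) (cadd d N) (cscal d N)).
  destruct (hamel_exists (in_b d N s p q)) as [BE [HBE1 [HBE2 HBE3]]].
  assert (HTin : forall l, (forall ax, In ax l -> BE (snd ax)) -> in_b d N s p q (T (lc l))).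
  { intros l Hl. destruct (lc_bound s p l) as [M [HM0 HMb]].
    - intros ax Hx. destruct (HBE1 _ (Hl ax Hx)) as [B EB]. exists B. apply (in_b_coef s p q _ B Hp Hq EB).
    - destruct (T_bnorm d N s p q lev sig (lc l) M i0 Hp Hq Hinj HM0 HMb) as [B [EB _]]. exists B; exact EB. }
  set (V := fun y => exists l, (forall ax, In ax l -> BE (snd ax)) /\ y = T (lc l)).
  set (BV := fun y => exists b, BE b /\ y = T b).
  set (f := fun y => match excluded_middle_informative (exists b, BE b /\ T b = y) with
                     | left H => proj1_sig (constructive_indefinite_description _ H) | right _ => y end).
  assert (Hf : forall y, BV y -> BE (f y) /\ T (f y) = y).
  { intros y [b [Hb ->]]. unfold f. destruct (excluded_middle_informative _) as [H|H].
    - exact (proj2_sig (constructive_indefinite_description _ H)).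
    - exfalso; apply H; eauto. }
  assert (HTinj : forall a b, T a = T b -> a = b) by (intros a b; apply Tmap_injective; auto).
  exists V. split; [|split].
  - split; [|split; [|split]].
    + intros x [l [Hl ->]]. auto.
    + exists nil. split. intros _ []. unfold T. simpl. rewrite Tmap_zero. reflexivity.
    + intros x y [l [Hl ->]] [l' [Hl' ->]]. exists (l ++ l'). split.
      * intros ax Hx. apply in_app_or in Hx; destruct Hx; auto.
      * unfold T, lc. rewrite lc_app, Tmap_add. reflexivity.
    + intros a x [l [Hl ->]]. exists (map (fun ax => (Cmul a (fst ax), snd ax)) l). split.
      * intros ax Hx. apply in_map_iff in Hx. destruct Hx as [ay [<- Hy]]; simpl; auto.
      * unfold T, lc. rewrite lc_scal, Tmap_scal. reflexivity.
  - intros x [l [Hl ->]]. destruct (classic (lc l = czero d N)) as [Z|Z].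
    + right. rewrite Z. unfold T. apply Tmap_zero.
    + left. assert (exists i j k, lc l i j k <> C0) as [i [j [k Hne]]].
      { apply NNPP. intros Hn. apply Z. cext. apply NNPP. intros H. apply Hn. eauto. }
      pose proof (HTin l Hl) as [B EB]. split; [exists B; auto|].
      apply (D_of_Pm psi s p q x0 _ B Mp); auto.
      apply (Tmap_Pm d N psi s p x0 Cc lev sig (lc l) (i, j, k)); auto.
  - exists BV, BE. split; [|split; [split; [|split]; auto|]].
    + split; [|split].
      * intros y [b [Hb ->]]. exists (((1,0), b) :: nil). split. intros ax [<-|[]]; auto. unfold lc. rewrite lc_single; auto.
      * intros l Hnd Hin Hz.
        set (l' := map (fun ax => (fst ax, f (snd ax))) l).
        assert (Hmap : map (fun ax => (fst ax, T (snd ax))) l' = l).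
        { unfold l'. rewrite map_map. simpl. rewrite <- (map_id l) at 2. apply map_ext_in.
          intros [a y] Hay. simpl. rewrite (proj2 (Hf y (Hin _ Hay))). reflexivity. }
        assert (Hl'0 : lc l' = czero d N).
        { apply HTinj. unfold T, lc. rewrite lc_Tmap. fold T. rewrite Hmap. rewrite Hz. unfold T. rewrite Tmap_zero. reflexivity. }
        assert (HBEl : forall ax, In ax l' -> BE (snd ax)).
        { intros ax Hx. unfold l' in Hx. apply in_map_iff in Hx. destruct Hx as [ay [<- Hy]]. simpl. apply Hf; auto. }
        assert (Hnd' : NoDup (map snd l')).
        { unfold l'. rewrite map_map. simpl. rewrite <- (map_map snd f).
          apply (NoDup_map_in f BV). intros y Hy. apply in_map_iff in Hy. destruct Hy as [ay [<- Hy]]. auto.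
          intros y y' Hy Hy' E. rewrite <- (proj2 (Hf y Hy)), <- (proj2 (Hf y' Hy')), E. reflexivity. auto. }
        intros ax Hax. pose proof (HBE2 l' Hnd' HBEl Hl'0 (fst ax, f (snd ax))) as H. simpl in H. apply H.
        unfold l'. apply in_map_iff. exists ax; auto.
      * intros w [l [Hl ->]]. exists (map (fun ax => (fst ax, T (snd ax))) l). split.
        -- intros ax Hx. apply in_map_iff in Hx. destruct Hx as [ay [<- Hy]]. simpl. exists (snd ay); auto.
        -- unfold T, lc. apply lc_Tmap.
    + exists f. split; [|split].
      * intros y Hy; apply Hf; auto.
      * intros y y' Hy Hy' E. rewrite <- (proj2 (Hf y Hy)), <- (proj2 (Hf y' Hy')), E. reflexivity.
      * intros b Hb. exists (T b). assert (BV (T b)) as HTb by (exists b; auto). split; auto.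
        apply HTinj. apply (proj2 (Hf _ HTb)).
Qed.

Lemma borel_open {X} (E : X -> Prop) near U : openE E near U -> borel E near U.
Proof. intros H F _ HF. apply HF; auto. Qed.
Lemma borel_compl {X} (E : X -> Prop) near B : borel E near B -> borel E near (fun x => E x /\ ~ B x).
Proof. intros HB F HF Ho. apply (proj1 (proj2 HF)). apply HB; auto. Qed.
Lemma borel_union {X} (E : X -> Prop) near (Bn : nat -> X -> Prop) :
  (forall n, borel E near (Bn n)) -> borel E near (fun x => exists n, Bn n x).
Proof. intros HB F HF Ho. apply (proj2 (proj2 HF)). intros n; apply HB; auto. Qed.
Lemma borel_ext {X} (E : X -> Prop) near B B' : borel E near B -> (forall x, B x <-> B' x) -> borel E near B'.
Proof.
  intros HB H. replace B' with B; auto. apply functional_extensionality; intros x. apply propositional_extensionality; auto.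
Qed.

Lemma Pm_mono {d N} psi s p x0 (c : Coef d N) m m' : (m <= m')%nat -> Pm psi s p x0 c m' -> Pm psi s p x0 c m.
Proof.
  intros Hm [K [HK H]]. exists K. split; auto. intros n. destruct (H n) as [i [j [k [Hj Hge]]]].
  exists i, j, k. split; auto. eapply Rge_trans; [exact Hge|]. apply Rle_ge. apply Rmult_le_compat_l; [lra|].
  apply Rle_Rpower; [lra|]. apply Rmult_le_compat_r; [apply pos_INR|].
  apply Rplus_le_compat_l, Ropp_le_contravar. apply Rinv_le_contravar. apply lt_0_INR; lia. apply le_INR; lia.
Qed.

Lemma Pm_sub {d N} psi s p x0 (a b : Coef d N) m : Pm psi s p x0 (csub d N a b) m -> Pm psi s p x0 a m \/ Pm psi s p x0 b m.
Proof.
  intros [K [HK H]]. apply NNPP. intros Hn. apply not_or_and in Hn. destruct Hn as [Ha Hb].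
  assert (Fa : exists n1, forall i j k, (n1 <= j)%nat -> Cmod (Cmul (a i j k) (wav d N psi i j k x0)) < K / 2 * Rpower 2 ((gam d s p - / INR (S m)) * INR j)).
  { apply NNPP. intros H1. apply Ha. exists (K / 2). split; [lra|]. intros n. apply NNPP. intros H2. apply H1. exists n.
    intros i j k Hj. apply Rnot_ge_lt. intros H3. apply H2. exists i, j, k. auto. }
  assert (Fb : exists n1, forall i j k, (n1 <= j)%nat -> Cmod (Cmul (b i j k) (wav d N psi i j k x0)) < K / 2 * Rpower 2 ((gam d s p - / INR (S m)) * INR j)).
  { apply NNPP. intros H1. apply Hb. exists (K / 2). split; [lra|]. intros n. apply NNPP. intros H2. apply H1. exists n.
    intros i j k Hj. apply Rnot_ge_lt. intros H3. apply H2. exists i, j, k. auto. }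
  destruct Fa as [n1 Fa], Fb as [n2 Fb]. destruct (H (Nat.max n1 n2)) as [i [j [k [Hj Hge]]]].
  specialize (Fa i j k ltac:(lia)). specialize (Fb i j k ltac:(lia)).
  assert (E : Cmul (csub d N a b i j k) (wav d N psi i j k x0) = Cadd (Cmul (a i j k) (wav d N psi i j k x0)) (Copp (Cmul (b i j k) (wav d N psi i j k x0)))).
  { unfold csub. destruct (a i j k), (b i j k), (wav d N psi i j k x0). unfold Cmul, Cadd, Copp; cbn [fst snd]; f_equal; ring. }
  rewrite E in Hge. pose proof (Cmod_add (Cmul (a i j k) (wav d N psi i j k x0)) (Copp (Cmul (b i j k) (wav d N psi i j k x0)))).
  rewrite Cmod_opp in H0. lra.
Qed.

Definition Dpp {d N} psi s p x0 (c : Coef d N) : Prop := forall m, Pm psi s p x0 c m.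

Lemma Dpp_sub {d N} psi s p x0 (a b : Coef d N) : ~ Dpp psi s p x0 a -> ~ Dpp psi s p x0 b -> ~ Dpp psi s p x0 (csub d N a b).
Proof.
  intros Ha Hb H. apply not_all_ex_not in Ha. apply not_all_ex_not in Hb. destruct Ha as [m1 Ha], Hb as [m2 Hb].
  destruct (Pm_sub psi s p x0 a b (Nat.max m1 m2) (H _)) as [H'|H'].
  - apply Ha. apply (Pm_mono _ _ _ _ _ _ (Nat.max m1 m2)); auto; lia.
  - apply Hb. apply (Pm_mono _ _ _ _ _ _ (Nat.max m1 m2)); auto; lia.
Qed.

Definition tauO d s p (m r : nat) (j : nat) : R := / INR (S r) * Rpower 2 ((gam d s p - / INR (S m)) * INR j).

Lemma Pm_open {d N} psi s p q x0 (c : Coef d N) m : in_b d N s p q c ->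
  (Pm psi s p x0 c m <-> exists r, forall n, Oset d N psi s p q x0 (tauO d s p m r) n c).
Proof.
  intros Hc. split.
  - intros [K [HK H]]. destruct (exists_nat_gt (/ K)) as [r Hr]. exists r. intros n. split; auto.
    destruct (H n) as [i [j [k [Hj Hge]]]]. exists i, j, k. split; auto. unfold tauO.
    assert (/ INR (S r) < K).
    { assert (0 < INR (S r)) by (apply lt_0_INR; lia). assert (INR r < INR (S r)) by (rewrite S_INR; lra).
      rewrite <- (Rinv_inv K). apply Rinv_lt_contravar. apply Rmult_lt_0_compat; [apply Rinv_0_lt_compat|]; lra. lra. }
    assert (0 < Rpower 2 ((gam d s p - / INR (S m)) * INR j)) by (unfold Rpower; apply exp_pos).
    assert (/ INR (S r) * Rpower 2 ((gam d s p - / INR (S m)) * INR j) < K * Rpower 2 ((gam d s p - / INR (S m)) * INR j)).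
    { apply Rmult_lt_compat_r; auto. } lra.
  - intros [r H]. exists (/ INR (S r)). split. apply Rinv_0_lt_compat, lt_0_INR; lia.
    intros n. destruct (H n) as [_ [i [j [k [Hj Hgt]]]]]. exists i, j, k. split; auto. unfold tauO in Hgt. lra.
Qed.

Definition Bset {d N} psi s p q x0 (c : Coef d N) : Prop := in_b d N s p q c /\ ~ Dpp psi s p x0 c.

Lemma Bset_borel d N psi s p q x0 Mp : Exp_pos p -> Exp_pos q -> 0 <= Mp -> (forall i y, Cmod (psi i y) <= Mp) ->
  borel (in_b d N s p q) (bnear d N s p q) (@Bset d N psi s p q x0).
Proof.
  intros Hp Hq HMp HM.
  set (E := in_b d N s p q). set (nr := bnear d N s p q).
  set (O := fun m r n => Oset d N psi s p q x0 (tauO d s p m r) n).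
  set (G := fun m r c => exists n, E c /\ ~ O m r n c).
  set (H := fun m c => E c /\ ~ (exists r, E c /\ ~ G m r c)).
  apply (borel_ext E nr (fun c => exists m, H m c)).
  - apply borel_union. intros m. apply borel_compl. apply borel_union. intros r. apply borel_compl.
    apply borel_union. intros n. apply borel_compl. apply borel_open. apply (Oset_open _ _ _ _ _ _ _ _ _ Mp); auto.
  - intros c. split.
    + intros [m [Ec Hm]]. split; auto. intros HD. destruct (proj1 (Pm_open psi s p q x0 c m Ec) (HD m)) as [r Hr].
      apply Hm. exists r. split; auto. intros [n [_ Hn]]. apply Hn. apply Hr.
    + intros [Ec HD]. apply not_all_ex_not in HD. destruct HD as [m Hm]. exists m. split; auto.
      intros [r [_ Hr]]. apply Hm. apply (proj2 (Pm_open psi s p q x0 c m Ec)). exists r. intros n.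
      apply NNPP. intros Hn. apply Hr. exists n. split; auto.
Qed.

Definition unitI (t : R) : Prop := Rle 0 t /\ Rle t 1.

Definition delta0 d N (i0 : Fin.t N) : Coef d N :=
  fun i j k => if excluded_middle_informative ((i, j, k) = (i0, 0%nat, zv d)) then (1, 0) else C0.
Definition gline d N s p lev sig (i0 : Fin.t N) (t : R) : Coef d N :=
  Tmap d N s p lev sig (cscal d N (t, 0) (delta0 d N i0)).

Lemma cw_delta d N s p (i0 : Fin.t N) t i j k : cw s p (cscal d N (t, 0) (delta0 d N i0)) i j k <= Rabs t.
Proof.
  unfold cw, cscal, delta0. destruct (excluded_middle_informative _) as [E|E].
  - inversion E; subst. unfold wt. simpl. rewrite Rmult_0_r, Rpower_O by lra.
    replace (Cmul (t, 0) (1, 0)) with (t, 0) by (unfold Cmul; cbn [fst snd]; f_equal; ring).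
    rewrite Cmod_real. lra.
  - replace (Cmul (t, 0) C0) with C0 by (unfold Cmul, C0; cbn [fst snd]; f_equal; ring).
    rewrite Cmod_C0, Rmult_0_l. apply Rabs_pos.
Qed.

Lemma gline_bnorm d N s p q lev sig (i0 : Fin.t N) t : Exp_pos p -> Exp_pos q -> lev_inj lev ->
  exists B, bnorm d N s p q (gline d N s p lev sig i0 t) = Some B /\ B <= Rabs t * Kq q.
Proof. intros. apply T_bnorm; auto. apply Rabs_pos. intros; apply cw_delta. Qed.

Lemma gline_sub d N s p lev sig (i0 : Fin.t N) t t' :
  csub d N (gline d N s p lev sig i0 t) (gline d N s p lev sig i0 t') = gline d N s p lev sig i0 (t - t').
Proof.
  unfold gline. rewrite <- Tmap_sub. f_equal. cext. unfold csub, cscal.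
  destruct (delta0 d N i0 i j k). unfold Cadd, Copp, Cmul; cbn [fst snd]; f_equal; ring.
Qed.

Lemma gline_Dpp d N psi s p x0 Cc lev sig (i0 : Fin.t N) t : 0 < Cc -> lev_ok psi x0 Cc lev -> sig_ok sig -> t <> 0 ->
  Dpp psi s p x0 (gline d N s p lev sig i0 t).
Proof.
  intros HC Hlev Hsig Ht m. apply (Tmap_Pm d N psi s p x0 Cc lev sig _ (i0, 0%nat, zv d)); auto.
  unfold cidx, cscal, delta0. cbn [fst snd]. destruct (excluded_middle_informative _) as [_|n]; [|exfalso; apply n; auto].
  unfold Cmul, C0; cbn [fst snd]. intros E. inversion E. apply Ht. lra.
Qed.

Lemma gline_cont d N s p q lev sig (i0 : Fin.t N) t eps : Exp_pos p -> Exp_pos q -> lev_inj lev -> 0 < eps ->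
  exists eta, 0 < eta /\ forall t', Rabs (t' - t) < eta ->
    bnear d N s p q (gline d N s p lev sig i0 t) (gline d N s p lev sig i0 t') eps.
Proof.
  intros Hp Hq Hinj He. pose proof (Kq_ge0 q).
  exists (eps / (Kq q + 1)). split. { unfold Rdiv; apply Rmult_lt_0_compat; [lra|apply Rinv_0_lt_compat; lra]. }
  intros t' Ht'. unfold bnear. rewrite gline_sub.
  destruct (gline_bnorm d N s p q lev sig i0 (t' - t) Hp Hq Hinj) as [B [EB HB]]. exists B. split; auto.
  assert (Rabs (t' - t) * Kq q <= Rabs (t' - t) * (Kq q + 1)) by (apply Rmult_le_compat_l; [apply Rabs_pos|lra]).
  assert (Rabs (t' - t) * (Kq q + 1) < eps).
  { apply (Rmult_lt_compat_r (Kq q + 1)) in Ht'; [|lra]. unfold Rdiv in Ht'. rewrite Rmult_assoc, Rinv_l in Ht' by lra. lra. }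
  lra.
Qed.

Lemma set_ext {X} (A B : X -> Prop) : (forall x, A x <-> B x) -> A = B.
Proof. intros H. apply functional_extensionality; intros x; apply propositional_extensionality; auto. Qed.

Lemma compact_line d N s p q lev sig (i0 : Fin.t N) : Exp_pos p -> Exp_pos q -> lev_inj lev ->
  compactE (in_b d N s p q) (bnear d N s p q) (fun c => exists t, unitI t /\ c = gline d N s p lev sig i0 t).
Proof.
  intros Hp Hq Hinj. set (g := gline d N s p lev sig i0).
  assert (Hgin : forall t, in_b d N s p q (g t)).
  { intros t. destruct (gline_bnorm d N s p q lev sig i0 t Hp Hq Hinj) as [B [EB _]]. exists B; exact EB. }
  split. { intros c [t [_ ->]]. auto. }
  intros Fam HFo HFc.
  assert (Hch : forall t, exists pr : (Coef d N -> Prop) * R, unitI t ->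
      Fam (fst pr) /\ 0 < snd pr /\ forall t', Rabs (t' - t) < snd pr -> fst pr (g t')).
  { intros t. destruct (classic (unitI t)) as [Ht|Ht].
    - destruct (HFc (g t) (ex_intro _ t (conj Ht eq_refl))) as [U [HU HUg]].
      destruct (proj2 (HFo U HU) (g t) HUg) as [eps [Heps HUe]].
      destruct (gline_cont d N s p q lev sig i0 t eps Hp Hq Hinj Heps) as [eta [Heta Hc]].
      exists (U, eta). intros _. cbn [fst snd]. split; [exact HU|]. split; [exact Heta|]. intros t' Ht'. apply (HUe (g t')); auto.
    - exists (fun _ => True, 1). intros H; contradiction. }
  set (ch := fun t => proj1_sig (constructive_indefinite_description _ (Hch t))).
  assert (Hchp : forall t, unitI t -> Fam (fst (ch t)) /\ 0 < snd (ch t) /\ forall t', Rabs (t' - t) < snd (ch t) -> fst (ch t) (g t')).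
  { intros t. exact (proj2_sig (constructive_indefinite_description _ (Hch t))). }
  assert (Hcond : forall t, (exists y, unitI t /\ Rabs (y - t) < snd (ch t)) -> unitI t).
  { intros t [y [H _]]; auto. }
  set (fam := mkfamily unitI (fun t y => unitI t /\ Rabs (y - t) < snd (ch t)) Hcond).
  destruct (compact_P3 0 1 fam) as [D [Hcov [l Hl]]].
  - split.
    + intros t Ht. exists t. simpl. split; auto. rewrite Rminus_diag, Rabs_R0. apply Hchp; auto.
    + intros t y [Ht Hy]. assert (Hd : 0 < snd (ch t) - Rabs (y - t)) by lra.
      exists (mkposreal _ Hd). intros z Hz. unfold disc in Hz; simpl in Hz. split; auto.
      pose proof (Rabs_triang (z - y) (y - t)). replace (z - y + (y - t)) with (z - t) in H by ring. lra.
  - exists (map (fun t => fst (ch t)) l). split.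
    + intros U HU. apply in_map_iff in HU. destruct HU as [t [<- Ht]]. apply Hl in Ht. destruct Ht as [Ht _].
      apply Hchp; auto.
    + intros c [t' [Ht' ->]]. destruct (Hcov t' Ht') as [y [[Hy1 Hy2] HyD]].
      exists (fst (ch y)). split.
      * apply (in_map (fun t => fst (ch t))). apply Hl. split; auto.
      * apply Hchp; auto.
Qed.

Lemma prevalent_part d N psi s p q x0 Cc lev (sig : nat -> Fin.t N * nat * Zvec d) Mp (i0 : Fin.t N)
  (lmu : (R -> Prop) -> R) (lM : (R -> Prop) -> Prop) :
  Exp_pos p -> Exp_pos q -> 0 < Cc -> lev_ok psi x0 Cc lev -> sig_ok sig -> 0 <= Mp ->
  (forall i y, Cmod (psi i y) <= Mp) ->
  lM unitI -> lmu unitI = 1 ->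
  (forall A, lM A -> lM (fun t => unitI t /\ ~ A t)) ->
  (forall An : nat -> R -> Prop, (forall n, lM (An n)) -> lM (fun t => exists n, An n t)) ->
  (forall A, 0 <= lmu A) ->
  (forall A, (forall t t', A t -> A t' -> t = t') -> lmu A = 0) ->
  (forall O, (forall t, O t -> unitI t) ->
     (forall t, O t -> exists eta, 0 < eta /\ forall t', unitI t' -> Rabs (t' - t) < eta -> O t') -> lM O) ->
  (forall An : nat -> R -> Prop, (forall n, lM (An n)) -> (forall n t, An n t -> unitI t) ->
     (forall m n t, m <> n -> An m t -> An n t -> False) ->
     infinite_sum (fun n => lmu (An n)) (lmu (fun t => exists n, An n t))) ->
  prevalent_b d N s p q (fun c => in_b d N s p q c /\ is_lub (div_set d N psi c x0) (gam d s p)).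
Proof.
  intros Hp Hq HCc Hlev Hsig HMp HM HMu Hmu1 HMc HMU Hmu0 Hmus HMo Hmusig.
  pose proof Hlev as [Hinj _].
  set (E := in_b d N s p q). set (nr := bnear d N s p q).
  set (g := gline d N s p lev sig i0).
  assert (Hgin : forall t, E (g t)).
  { intros t. destruct (gline_bnorm d N s p q lev sig i0 t Hp Hq Hinj) as [B [EB _]]. exists B; exact EB. }
  set (pre := fun (A : Coef d N -> Prop) t => unitI t /\ A (g t)).
  set (mu := fun A => lmu (pre A)).
  assert (HpreE : pre E = unitI).
  { apply set_ext. intros t. unfold pre. split; [tauto|]. intros H; split; auto. }
  assert (Hpre : forall B, borel E nr B -> lM (pre B)).
  { intros B HB. apply (HB (fun B => lM (pre B))).
    - split; [|split].
      + rewrite HpreE; auto.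
      + intros A HA. replace (pre (fun x => E x /\ ~ A x)) with (fun t => unitI t /\ ~ pre A t); auto.
        apply set_ext. intros t. unfold pre. pose proof (Hgin t). tauto.
      + intros An HA. replace (pre (fun x => exists n, An n x)) with (fun t => exists n, pre (An n) t); auto.
        apply set_ext. intros t. unfold pre. split; [intros [n [H1 H2]]|intros [H1 [n H2]]]; eauto.
    - intros U [HUE HUo]. apply HMo. intros t [Ht _]; auto.
      intros t [Ht HUt]. destruct (HUo _ HUt) as [eps [Heps HUe]].
      destruct (gline_cont d N s p q lev sig i0 t eps Hp Hq Hinj Heps) as [eta [Heta Hc]].
      exists eta. split; auto. intros t' Ht' Hd. split; auto. apply HUe; auto. apply Hc; auto. }
  exists (@Bset d N psi s p q x0). split.
  - split. { apply (Bset_borel _ _ _ _ _ _ _ Mp); auto. }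
    exists mu. split; [|split].
    + split; [|split; [|split]].
      * intros B _. apply Hmu0.
      * unfold mu. fold E. rewrite HpreE. auto.
      * intros B B' _ H. unfold mu. f_equal. f_equal. apply set_ext. intros x; split; apply H.
      * intros Bn HB Hdisj. unfold mu.
        replace (pre (fun x => exists n, Bn n x)) with (fun t => exists n, pre (Bn n) t).
        2: { apply set_ext. intros t. unfold pre. split; [intros [n [H1 H2]]|intros [H1 [n H2]]]; eauto. }
        apply Hmusig.
        -- intros n; apply Hpre; auto.
        -- intros n t [H _]; auto.
        -- intros m n t Hmn [_ H1] [_ H2]. eapply Hdisj; eauto.
    + exists (fun c => exists t, unitI t /\ c = g t). split.
      * apply compact_line; auto.
      * unfold mu. replace (pre (fun c => exists t, unitI t /\ c = g t)) with unitI; auto.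
        apply set_ext. intros t. unfold pre. split; [intros H; split; eauto|tauto].
    + intros x Hx. unfold mu. apply Hmus. intros t t' [Ht [_ [_ Hbt]]] [Ht' [_ [_ Hbt']]].
      apply NNPP. intros Hne.
      apply (Dpp_sub psi s p x0 _ _ Hbt Hbt').
      replace (csub d N (csub d N (g t) x) (csub d N (g t') x)) with (g (t - t')).
      * apply (gline_Dpp d N psi s p x0 Cc lev sig i0); auto. intros H; apply Hne; lra.
      * unfold g. rewrite <- gline_sub. fold g. cext. unfold csub.
        destruct (g t i j k), (g t' i j k), (x i j k). unfold Cadd, Copp; cbn [fst snd]; f_equal; ring.
  - intros c [Hc HD]. split; auto. intros HDpp. apply HD. split; auto.
    destruct Hc as [B EB]. apply (D_of_Pm psi s p q x0 c B Mp); auto.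
Qed.

From mathcomp Require all_boot all_order all_algebra all_classical all_reals all_analysis.
From mathcomp Require Rstruct Rstruct_topology lra measurable_realfun.

Module LebI.
Import all_boot all_order all_algebra.
Import all_classical all_reals all_analysis.
Import Rstruct Rstruct_topology.
Import lra measurable_realfun.
Import Order.TTheory GRing.Theory Num.Theory.
Import numFieldNormedType.Exports.
Local Open Scope classical_set_scope.
Local Open Scope ring_scope.

Definition lmu (A : Rdefinitions.R -> Prop) : Rdefinitions.R := fine (@lebesgue_measure Rdefinitions.R A).
Definition lM (A : Rdefinitions.R -> Prop) : Prop := @measurable _ (measurableTypeR Rdefinitions.R) A.

Lemma unitI_itv : unitI = [set` `[0%R, 1%R]] :> set Rdefinitions.R.
Proof.
  apply/seteqP; split => x /=; rewrite /unitI in_itv /=.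
  - by move=> [/RleP -> /RleP ->].
  - by move=> /andP [/RleP H1 /RleP H2].
Qed.

Lemma lM_unit : lM unitI.
Proof. rewrite /lM unitI_itv. exact: measurable_itv. Qed.

Lemma lmu_unit : lmu unitI = 1.
Proof. rewrite /lmu unitI_itv lebesgue_measure_itv /= lte_fin ltr01 /=. rewrite oppr0 /=. by rewrite addr0. Qed.

Lemma lM_compl A : lM A -> lM (fun t => unitI t /\ ~ A t).
Proof. move=> HA. have -> : (fun t => unitI t /\ ~ A t) = unitI `\` A by []. exact: measurableD lM_unit HA. Qed.

Lemma lM_union (An : nat -> Rdefinitions.R -> Prop) : (forall n, lM (An n)) -> lM (fun t => exists n, An n t).
Proof.
  move=> H. have -> : (fun t => exists n, An n t) = \bigcup_n An n.
    by apply/seteqP; split => x /= [n]; [exists n|exists n].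
  exact: bigcupT_measurable.
Qed.

Lemma lmu_ge0 A : Rle 0 (lmu A).
Proof. apply/RleP. rewrite /lmu. apply: fine_ge0. exact: measure_ge0. Qed.

Lemma lmu_fin A : lM A -> (forall t, A t -> unitI t) -> (@lebesgue_measure Rdefinitions.R A = (lmu A)%:E) /\ Rle (lmu A) 1.
Proof.
  move=> HA Hsub.
  have Hle : (@lebesgue_measure Rdefinitions.R A <= @lebesgue_measure Rdefinitions.R unitI)%E.
    by apply: le_measure => //; rewrite inE //; exact: lM_unit.
  have H1 : @lebesgue_measure Rdefinitions.R unitI = 1%E.
    by rewrite unitI_itv lebesgue_measure_itv /= lte_fin ltr01 /= oppr0 /= addr0.
  have Hfin : @lebesgue_measure Rdefinitions.R A \is a fin_num.
    rewrite ge0_fin_numE; last exact: measure_ge0.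
    by apply: (le_lt_trans Hle); rewrite H1 ltry.
  split; first by rewrite /lmu fineK.
  apply/RleP. rewrite /lmu -lee_fin fineK //. by rewrite -H1.
Qed.

Lemma lmu_sub1 A : (forall t t', A t -> A t' -> t = t') -> lmu A = 0.
Proof.
  move=> Hs. case: (pselect (exists t, A t)) => [[t0 Ht0]|Hn].
  - have -> : A = [set t0].
      apply/seteqP; split => x /=; first by move=> Hx; exact: (Hs _ _ Hx Ht0).
      by move=> ->.
    by rewrite /lmu lebesgue_measure_set1.
  - have -> : A = set0. by apply/seteqP; split => x // Hx; apply: Hn; exists x.
    by rewrite /lmu measure0.
Qed.

Lemma lM_relopen (O : Rdefinitions.R -> Prop) : (forall t, O t -> unitI t) ->
  (forall t, O t -> exists eta, Rlt 0 eta /\ forall t', unitI t' -> Rlt (Rabs (Rminus t' t)) eta -> O t') -> lM O.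
Proof.
  move=> Hsub Hop.
  have [eta Heta] : exists eta : Rdefinitions.R -> Rdefinitions.R, forall t, O t ->
      Rlt 0 (eta t) /\ forall t', unitI t' -> Rlt (Rabs (Rminus t' t)) (eta t) -> O t'.
    have Hex : forall t, exists e, O t -> Rlt 0 e /\ forall t', unitI t' -> Rlt (Rabs (Rminus t' t)) e -> O t'.
      move=> t. case: (pselect (O t)) => [Ot|nOt].
      - by have [e He] := Hop t Ot; exists e.
      - by exists 0.
    exists (fun t => proj1_sig (cid (Hex t))) => t. exact: (proj2_sig (cid (Hex t))).
  have -> : O = unitI `&` \bigcup_(t in O) [set` `]t - eta t, t + eta t[].
    apply/seteqP; split => x /=.
    - move=> Ox; split; first exact: Hsub. exists x => //=. rewrite in_itv /=.
      have := (proj1 (Heta x Ox)) => /RltP H. rewrite R0E in H. apply/andP; split; lra.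
    - move=> [Ux [t Ot]] /=. rewrite in_itv /= => /andP [H1 H2].
      apply: (proj2 (Heta t Ot)) => //. apply: Rabs_def1.
      + apply/RltP. rewrite RminusE. lra.
      + apply/RltP. rewrite RminusE RoppE. lra.
  apply: measurableI; first exact: lM_unit.
  apply: open_measurable. apply: bigcup_open => t _. exact: interval_open.
Qed.

Lemma lmu_sigma (An : nat -> Rdefinitions.R -> Prop) : (forall n, lM (An n)) ->
  (forall n t, An n t -> unitI t) -> (forall m n t, m <> n -> An m t -> An n t -> False) ->
  infinite_sum (fun n => lmu (An n)) (lmu (fun t => exists n, An n t)).
Proof.
  move=> HM Hsub Hdisj.
  have Htriv : trivIset setT An.
    move=> i j _ _ [x [Hi Hj]]. case: (pselect (i = j)) => [//|Hne]. by case: (Hdisj _ _ _ Hne Hi Hj).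
  have Hs := @measure_sigma_additive _ _ _ (@lebesgue_measure Rdefinitions.R) An HM Htriv.
  have HU : \bigcup_n An n = (fun t => exists n, An n t).
    by apply/seteqP; split => x /= [n]; [exists n|exists n].
  rewrite HU in Hs.
  have HUM : lM (fun t => exists n, An n t) by apply: lM_union.
  have [HUe _] := lmu_fin _ HUM (fun t => fun '(ex_intro n Hn) => Hsub n t Hn).
  have Hei : forall i, @lebesgue_measure Rdefinitions.R (An i) = (lmu (An i))%:E.
    by move=> i; have [] := lmu_fin _ (HM i) (Hsub i).
  have Hs' : (fun n => (\sum_(0 <= i < n) lmu (An i))%:E) @ \oo --> (lmu (fun t => exists n, An n t))%:E.
    rewrite -HUe. apply: cvg_trans Hs. apply: near_eq_cvg. near=> n => /=.
    rewrite -sumEFin. apply: eq_bigr => i _. exact: Hei i.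
  have Hf : (fun n => (\sum_(0 <= i < n) lmu (An i))%R) @ \oo --> lmu (fun t => exists n, An n t).
    by move/fine_cvgP: Hs' => [_ Hs'].
  move=> eps /RltP Heps. have [N _ HN] := @cvgr_dist_lt _ Rdefinitions.R^o _ _ _ (fun n => (\sum_(0 <= i < n) lmu (An i))%R) (lmu (fun t => exists n, An n t)) Hf _ Heps.
  exists N => n Hn. rewrite /R_dist RabsE RminusE sum_f_R0E distrC. apply/RltP. apply: HN => /=.
  apply/ssrnat.leP. lia.
Unshelve. all: by end_near.
Qed.

End LebI.

Theorem mainTheorem16 (d N : nat) (psi : Fin.t N -> Rvec d -> Cpx)
  (s : R) (p q : Exp) (x0 : Rvec d) :
  (1 <= d)%nat -> (1 <= N)%nat ->
  (forall i, bounded_fun d (psi i)) ->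
  (forall i, fast_decaying d (psi i)) ->
  Exp_pos p -> Exp_pos q ->
  dyadic_covering d N psi ->
  let D := fun c : Coef d N =>
    in_b d N s p q c /\ is_lub (div_set d N psi c x0) (- s + INR d * inv_exp p) in
  prevalent_b d N s p q D /\ residual_b d N s p q D /\ max_lineable_b d N s p q D.
Proof.
  intros Hd HN Hb Hfd Hp Hq Hcov D.
  assert (i0 : Fin.t N). { destruct N as [|N']; [lia|exact Fin.F1]. }
  destruct (psi_bound d N psi Hb) as [Mp [HMp HM]].
  destruct (exists_lev d N psi x0 Hcov) as [Cc [lev [HCc Hlev]]].
  destruct (exists_sig d N i0) as [sig Hsig].
  split; [|split].
  - exact (prevalent_part d N psi s p q x0 Cc lev sig Mp i0 LebI.lmu LebI.lM Hp Hq HCc Hlev Hsig HMp HM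
      LebI.lM_unit LebI.lmu_unit LebI.lM_compl LebI.lM_union LebI.lmu_ge0 LebI.lmu_sub1 LebI.lM_relopen LebI.lmu_sigma).
  - exact (residual_part d N psi s p q x0 Cc lev Mp Hp Hq HCc Hlev HMp HM).
  - exact (lineable_part d N psi s p q x0 Cc lev sig Mp i0 Hp Hq HCc Hlev Hsig HMp HM).
Qed.
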